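(* Let $r\ge0$ and let $A$ be a finitely generated $E_r$-cofibrant dga over a field $\mathbf{k}$ of characteristic $0$. The following are equivalent: (1) $A$ admits an $r$-splitting; (2) the morphism $E_r:\mathrm{Aut}_W(A)\to\mathrm{Aut}(E_r(A))$ is surjective; (3) there exist $\alpha\in\mathbf{k}^*$, not a root of unity, and $\Phi\in\mathrm{Aut}_W(A)$ such that $E_r(\Phi)=\varphi_\alpha$, the $r$-bigrading automorphism of $E_r(A)$ associated with $\alpha$.
   Context: Filtered dga's: a filtered dga over $\mathbf{k}$ is a non-negatively graded commutative dga $A$ (differential of degree $+1$) with an increasing multiplicative regular exhaustive filtration $W$ by subcomplexes, with filtered unit ($\mathbf{k}$ trivially filtered). $E_r(A)$ is the spectral sequence of $(A,W)$ with $E_0^{-p,n+p}(A)=Gr^W_pA^n$, a bigraded dga. $\mathrm{Aut}_W(A)$ is the group of filtered dga automorphisms of $A$; $\mathrm{Aut}(E_r(A))$ is the group of bigraded dga automorphisms of $E_r(A)$ (commuting with $d_r$); $E_r:\mathrm{Aut}_W(A)\to\mathrm{Aut}(E_r(A))$ is the induced map. For $\alpha\in\mathbf{k}^*$, the $r$-bigrading automorphism $\varphi_\alpha$ of $E_r(A)$ is $\varphi_\alpha(a)=\alpha^{nr+p}a$ for $a\in E_r^{-p,n+p}(A)$. $E_r$-cofibrant dga's: given a filtered dga $A$, an $E_r$-cofibrant extension of degree $n$ and weight $p$ is $A\otimes_\xi\Lambda V$ where $V$ is a vector space concentrated in degree $n$ and pure weight $p$ and $\xi:V\to W_{p-r}A^{n+1}$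 is linear with $d\circ\xi=0$; differential $dv=\xi(v)$ and filtration extended multiplicatively. An $E_r$-cofibrant dga is the colimit of a sequence of such extensions starting from $\mathbf{k}$; finitely generated means obtained by finitely many extensions with finite-dimensional $V$. $r$-splitting: a direct sum decomposition $A=\bigoplus_{p,q}A^{p,q}$ into subspaces such that $d(A^{p,q})\subset A^{p+r,q-r+1}$, $A^{p,q}\cdot A^{p',q'}\subset A^{p+p',q+q'}$ and $W_mA^n=\bigoplus_{p\le m}A^{-p,n+p}$. *)

(* Defs.v *)
From HB Require Import structures.
From mathcomp Require Import all_boot all_order all_algebra.
Set Implicit Arguments. Unset Strict Implicit. Unset Printing Implicit Defensive.
Import Order.TTheory GRing.Theory Num.Theory.
Local Open Scope ring_scope.

(* Data of a finitely generated candidate E_r-cofibrant dga: an algebra A over k,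
   finitely many generators v_0 < ... < v_{N-1} (in the order of the extensions),
   with their degrees and weights, and a differential d. *)
Record cdga_data (k : fieldType) (A : algType k) := CDGAData {
  ngen : nat;
  gen : 'I_ngen -> A;
  gdeg : 'I_ngen -> nat;
  gwt : 'I_ngen -> int;
  dif : A -> A }.

Arguments ngen {k A} c.
Arguments gen {k A} c _.
Arguments gdeg {k A} c _.
Arguments gwt {k A} c _.
Arguments dif {k A} c _.

Section Defs.
Variables (k : fieldType) (A : algType k) (D : cdga_data A).
Local Notation N := (ngen D).
Local Notation v := (gen D).
Local Notation d := (dif D).

Definition expo := {ffun 'I_N -> nat}.
Definition mono (e : expo) : A := \prod_(i < N) v i ^+ e i.
Definition adm (e : expo) : bool := [forall i, odd (gdeg D i) ==> (e i <= 1)%N].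
Definition mdeg (e : expo) : int := ((\sum_(i < N) e i * gdeg D i)%N)%:Z.
Definition mwt (e : expo) : int := \sum_(i < N) (e i)%:Z * gwt D i.

Definition inspan (P : pred expo) (a : A) : Prop :=
  exists (s : seq expo) (c : expo -> k), all P s /\ a = \sum_(e <- s) c e *: mono e.

(* A^n (n : int; A^n = 0 for n < 0) *)
Definition hom (n : int) : A -> Prop := inspan (fun e => adm e && (mdeg e == n)).
(* W_m A^n, the multiplicative extension of the weights of the generators *)
Definition Wf (m n : int) : A -> Prop :=
  inspan (fun e => [&& adm e, mdeg e == n & mwt e <= m]).

Definition free_gc : Prop :=
  [/\ forall i j, v i * v j = ((-1) ^+ (gdeg D i * gdeg D j)) *: (v j * v i),
      forall (s : seq expo) (c : expo -> k), uniq s -> all adm s ->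
        \sum_(e <- s) c e *: mono e = 0 -> forall e, e \in s -> c e = 0 &
      forall a, inspan adm a].

(* d is a k-linear derivation of degree +1 with d^2 = 0, and
   d v_i lies in W_{p_i - r} of the subalgebra generated by v_0..v_{i-1},
   in degree n_i + 1 (E_r-cofibrant extensions). *)
Definition diff_cof (r : nat) : Prop :=
  [/\ forall (c : k) (a b : A), d (c *: a + b) = c *: d a + d b,
      forall (n : nat) (a b : A), hom n%:Z a -> d (a * b) = d a * b + (-1) ^+ n *: (a * d b),
      forall a, d (d a) = 0 &
      forall i : 'I_N, inspan (fun e => [&& adm e, [forall j : 'I_N, (i <= j)%N ==> (e j == 0%N)],
                                        mdeg e == ((gdeg D i).+1)%:Z & mwt e <= gwt D i - r%:Z])
                             (d (v i))].

Definition regularW : Prop := forall n : int, exists q : int, forall a, Wf q n a -> a = 0.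

Definition fg_Er_cofibrant (r : nat) : Prop := free_gc /\ diff_cof r /\ regularW.

(* Spectral sequence: E_r^{-p,n+p} = Z_r^{p,n} / B_r^{p,n}, with
   Z_s^{p,n} = W_p A^n ∩ d^{-1}(W_{p-s} A^{n+1}) and
   B_r^{p,n} = Z_{r-1}^{p-1,n} + d Z_{r-1}^{p+r-1,n-1}. *)
Definition Zr (s p n : int) (a : A) : Prop := Wf p n a /\ Wf (p - s) (n + 1) (d a).
Definition Br (r : nat) (p n : int) (a : A) : Prop :=
  exists z1 z2, Zr (r%:Z - 1) (p - 1) n z1 /\ Zr (r%:Z - 1) (p + r%:Z - 1) (n - 1) z2
                /\ a = z1 + d z2.

Definition WAut (Phi : A -> A) : Prop :=
  [/\ (forall (c : k) a b, Phi (c *: a + b) = c *: Phi a + Phi b),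
      (forall a b, Phi (a * b) = Phi a * Phi b) /\ Phi 1 = 1,
      (forall a, Phi (d a) = d (Phi a)),
      bijective Phi &
      (forall m n a, Wf m n (Phi a) <-> Wf m n a)].

(* Aut(E_r(A)): a bigraded dga automorphism of E_r(A), presented by a family of
   lifts G p n : Z_r^{p,n} -> Z_r^{p,n}, well defined, linear, bijective modulo
   B_r^{p,n}, multiplicative, unital, and commuting with d_r. *)
Definition EAut (r : nat) (G : int -> int -> A -> A) : Prop :=
  [/\ (forall p n x, Zr r%:Z p n x -> Zr r%:Z p n (G p n x)),
      (forall p n (c : k) x y, Zr r%:Z p n x -> Zr r%:Z p n y ->
          Br r p n (G p n (c *: x + y) - (c *: G p n x + G p n y))),
      (forall p n x, Br r p n x -> Br r p n (G p n x)),
      (forall p n x, Zr r%:Z p n x -> Br r p n (G p n x) -> Br r p n x) &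
      [/\ (forall p n y, Zr r%:Z p n y -> exists x, Zr r%:Z p n x /\ Br r p n (G p n x - y)),
          (forall p n p' n' x y, Zr r%:Z p n x -> Zr r%:Z p' n' y ->
              Br r (p + p') (n + n') (G (p + p') (n + n') (x * y) - G p n x * G p' n' y)),
          Br r 0 0 (G 0 0 1 - 1) &
          (forall p n x, Zr r%:Z p n x ->
              Br r (p - r%:Z) (n + 1) (G (p - r%:Z) (n + 1) (d x) - d (G p n x)))]].

Definition induces (r : nat) (Phi : A -> A) (G : int -> int -> A -> A) : Prop :=
  forall p n x, Zr r%:Z p n x -> Br r p n (Phi x - G p n x).

Definition Er_surjective (r : nat) : Prop :=
  forall G, EAut r G -> exists Phi, WAut Phi /\ induces r Phi G.

(* the r-bigrading automorphism: alpha^{nr+p} on E_r^{-p,n+p} *)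
Definition bigrading (r : nat) (alpha : k) : int -> int -> A -> A :=
  fun p n x => alpha ^ (n * r%:Z + p) *: x.

Definition bigrading_lift (r : nat) : Prop :=
  exists alpha : k, [/\ alpha != 0, (forall m : nat, (0 < m)%N -> alpha ^+ m != 1) &
    exists Phi, WAut Phi /\ induces r Phi (bigrading r alpha)].

Definition r_splitting (r : nat) : Prop :=
  exists S : int -> int -> A -> Prop,
  [/\ (forall p q, S p q 0 /\ forall (c : k) x y, S p q x -> S p q y -> S p q (c *: x + y)),
      (forall a, exists (s : seq (int * int)) (x : int * int -> A),
          (forall i, i \in s -> S i.1 i.2 (x i)) /\ a = \sum_(i <- s) x i),
      (forall (s : seq (int * int)) (x : int * int -> A), uniq s ->
          (forall i, i \in s -> S i.1 i.2 (x i)) -> \sum_(i <- s) x i = 0 ->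
          forall i, i \in s -> x i = 0),
      (forall p q x, S p q x -> S (p + r%:Z) (q - r%:Z + 1) (d x)) &
      [/\ (forall p q p' q' x y, S p q x -> S p' q' y -> S (p + p') (q + q') (x * y)) &
          (forall m n a, Wf m n a <-> exists (s : seq int) (x : int -> A),
              (forall p, p \in s -> p <= m /\ S (- p) (n + p) (x p)) /\ a = \sum_(p <- s) x p)]].

End Defs.

(* Main.v *)
Require Import Defs.
From HB Require Import structures.
From mathcomp Require Import all_boot all_order all_algebra.
From Stdlib Require Import ClassicalEpsilon.
From mathcomp Require Import zify ring.
Set Implicit Arguments. Unset Strict Implicit. Unset Printing Implicit Defensive.
Import Order.TTheory GRing.Theory Num.Theory.
Local Open Scope ring_scope.
Lemma sum_pick (V : nmodType) (I : eqType) (u : seq I) (x : I) (F : I -> V) :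
  uniq u -> \sum_(i <- u | x == i) F i = if x \in u then F x else 0.
Proof.
elim: u => [|y u IH] /=; first by rewrite big_nil.
case/andP => yu uu; rewrite big_cons in_cons IH //.
case: (eqVneq x y) => [-> | nxy] /=.
  by rewrite (negbTE yu) addr0.
by [].
Qed.

Lemma sum_count (V : nmodType) (I : eqType) (s u : seq I) (F : I -> V) :
  uniq u -> {subset s <= u} ->
  \sum_(i <- s) F i = \sum_(i <- u) F i *+ (count_mem i s).
Proof.
move=> uu; elim: s => [|x s IH] su.
  by rewrite big_nil big1 // => i _; rewrite mulr0n.
rewrite big_cons IH; last by move=> i hi; apply: su; rewrite in_cons hi orbT.
have -> : \sum_(i <- u) F i *+ (count_mem i (x :: s)) =
          \sum_(i <- u) (F i *+ (x == i) + F i *+ (count_mem i s)).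
  by apply: eq_bigr => i _; rewrite /= mulrnDr.
rewrite big_split /=; congr (_ + _).
under eq_bigr do rewrite mulrb.
rewrite -big_mkcond /= sum_pick // su //.
by rewrite in_cons eqxx.
Qed.
Lemma sum_pick2 (V : nmodType) (I : eqType) (u : seq I) (x : I) (F : I -> V) :
  uniq u -> \sum_(i <- u | i == x) F i = if x \in u then F x else 0.
Proof.
move=> uu; rewrite -(@sum_pick _ _ u x F uu); apply: eq_bigl => i; by rewrite eq_sym.
Qed.

Lemma sum_out (V : nmodType) (I : eqType) (u : seq I) (x : I) (F : I -> V) :
  x \notin u -> \sum_(i <- u | i == x) F i = 0.
Proof.
move=> xu; rewrite big1_seq // => i /andP [/eqP -> h]; by rewrite h in xu.
Qed.

Lemma sum_regroup (V : nmodType) (I : eqType) (s u : seq I) (x : I -> V) :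
  uniq u -> {subset s <= u} ->
  \sum_(j <- u) \sum_(l <- s | l == j) x l = \sum_(l <- s) x l.
Proof.
move=> uu su.
under eq_bigr do rewrite big_mkcond.
rewrite exchange_big /=; apply: eq_big_seq => l ls.
rewrite -big_mkcond /=.
rewrite -[X in _ = X](_ : \sum_(j <- u | l == j) x l = x l).
  by apply: eq_bigl => j.
by rewrite (@sum_pick _ _ u l (fun _ => x l) uu) su.
Qed.

Definition is_dec (k : fieldType) (V : lmodType k) (I : eqType) (Vs : I -> V -> Prop)
  (a : V) (s : seq I) (x : I -> V) :=
  (forall i, i \in s -> Vs i (x i)) /\ a = \sum_(i <- s) x i.

Definition DS (k : fieldType) (V : lmodType k) (I : eqType) (Vs : I -> V -> Prop) :=
  [/\ (forall i, Vs i 0 /\ forall (c : k) x y, Vs i x -> Vs i y -> Vs i (c *: x + y)),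
      (forall a, exists s x, is_dec Vs a s x) &
      (forall s x, uniq s -> (forall i, i \in s -> Vs i (x i)) -> \sum_(i <- s) x i = 0 ->
         forall i, i \in s -> x i = 0)].

Definition dch (k : fieldType) (V : lmodType k) (I : eqType) (Vs : I -> V -> Prop) (a : V) :
  seq I * (I -> V) :=
  epsilon (inhabits ([::], fun _ => 0)) (fun p => is_dec Vs a p.1 p.2).

Definition proj (k : fieldType) (V : lmodType k) (I : eqType) (Vs : I -> V -> Prop) (i : I) (a : V) : V :=
  \sum_(j <- (dch Vs a).1 | j == i) (dch Vs a).2 j.

Lemma dch_spec (k : fieldType) (V : lmodType k) (I : eqType) (Vs : I -> V -> Prop) a s x :
  is_dec Vs a s x -> is_dec Vs a (dch Vs a).1 (dch Vs a).2.
Proof.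
move=> h; rewrite /dch; apply: (epsilon_spec _ (fun p => is_dec Vs a p.1 p.2)).
by exists (s, x).
Qed.

Lemma DS_add (k : fieldType) (V : lmodType k) (I : eqType) (Vs : I -> V -> Prop) i x y :
  DS Vs -> Vs i x -> Vs i y -> Vs i (x + y).
Proof. by case=> hs _ _ hx hy; rewrite -[x]scale1r; apply: (hs i).2. Qed.

Lemma DS_sum (k : fieldType) (V : lmodType k) (I J : eqType) (Vs : I -> V -> Prop) i
  (s : seq J) (P : pred J) (F : J -> V) :
  DS Vs -> (forall j, j \in s -> P j -> Vs i (F j)) -> Vs i (\sum_(j <- s | P j) F j).
Proof.
move=> hD hF; rewrite big_seq_cond; apply: big_ind.
- by case: hD => hs _ _; case: (hs i).
- by move=> x y; apply: DS_add.
- by move=> j /andP [] /hF.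
Qed.

Lemma DS_grp (k : fieldType) (V : lmodType k) (I : eqType) (Vs : I -> V -> Prop) i s x :
  DS Vs -> (forall j, j \in s -> Vs j (x j)) -> Vs i (\sum_(l <- s | l == i) x l).
Proof.
move=> hD hx; apply: DS_sum => // j js /eqP ej; rewrite -ej; exact: hx.
Qed.

Lemma proj_dec (k : fieldType) (V : lmodType k) (I : eqType) (Vs : I -> V -> Prop) a t y i :
  DS Vs -> is_dec Vs a t y -> proj Vs i a = \sum_(j <- t | j == i) y j.
Proof.
move=> hD hty; have [hsx ea] := dch_spec hty; case: hty => hy ea'.
set s := (dch Vs a).1 in hsx ea *; set x := (dch Vs a).2 in hsx ea *.
rewrite /proj -/s -/x.
pose u := undup (s ++ t).
have uu : uniq u by apply: undup_uniq.
have su : {subset s <= u} by move=> j js; rewrite mem_undup mem_cat js.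
have tu : {subset t <= u} by move=> j js; rewrite mem_undup mem_cat js orbT.
pose z j := \sum_(l <- s | l == j) x l - \sum_(l <- t | l == j) y l.
have hz : forall j, j \in u -> Vs j (z j).
  move=> j _; rewrite /z; case: (hD) => hs _ _.
  rewrite -[_ - _](_ : (-1) *: \sum_(l <- t | l == j) y l + \sum_(l <- s | l == j) x l = _);
    last by rewrite scaleN1r addrC.
  by apply: (hs j).2; apply: DS_grp => //.
have sz : \sum_(j <- u) z j = 0.
  rewrite /z sumrB !sum_regroup // -ea -ea'; exact: subrr.
case: hD => hs hd hi.
case iu : (i \in u).
  by apply/eqP; rewrite -subr_eq0; apply/eqP; apply: (hi u z uu hz sz i iu).
rewrite !sum_out //.
  by apply/negP => /tu; rewrite iu.
by apply/negP => /su; rewrite iu.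
Qed.

Lemma proj_in (k : fieldType) (V : lmodType k) (I : eqType) (Vs : I -> V -> Prop) i a :
  DS Vs -> Vs i (proj Vs i a).
Proof.
move=> hD; case: (hD) => _ hd _; have [s [x h]] := hd a.
have [hx _] := dch_spec h; exact: DS_grp.
Qed.

Lemma proj_sum (k : fieldType) (V : lmodType k) (I : eqType) (Vs : I -> V -> Prop) t y i :
  DS Vs -> uniq t -> (forall j, j \in t -> Vs j (y j)) ->
  proj Vs i (\sum_(j <- t) y j) = if i \in t then y i else 0.
Proof.
move=> hD ut hy; rewrite (proj_dec i hD (conj hy erefl)); exact: sum_pick2.
Qed.

Lemma proj_self (k : fieldType) (V : lmodType k) (I : eqType) (Vs : I -> V -> Prop) i j x :
  DS Vs -> Vs j x -> proj Vs i x = if i == j then x else 0.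
Proof.
move=> hD hx; have h : is_dec Vs x [:: j] (fun _ => x).
  by split; [move=> l; rewrite inE => /eqP -> | rewrite big_seq1].
rewrite (proj_dec i hD h) big_cons big_nil addr0.
by rewrite eq_sym; case: (i == j).
Qed.

Lemma proj_recon (k : fieldType) (V : lmodType k) (I : eqType) (Vs : I -> V -> Prop) a s x u :
  DS Vs -> is_dec Vs a s x -> uniq u -> {subset s <= u} ->
  a = \sum_(j <- u) proj Vs j a.
Proof.
move=> hD h uu su; rewrite (eq_bigr _ (fun j _ => proj_dec j hD h)) sum_regroup //.
by case: h.
Qed.

Lemma proj_supp (k : fieldType) (V : lmodType k) (I : eqType) (Vs : I -> V -> Prop) a s x i :
  DS Vs -> is_dec Vs a s x -> i \notin s -> proj Vs i a = 0.
Proof. move=> hD h his; rewrite (proj_dec i hD h); exact: sum_out. Qed.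

Lemma proj_lin (k : fieldType) (V : lmodType k) (I : eqType) (Vs : I -> V -> Prop) i c a b :
  DS Vs -> proj Vs i (c *: a + b) = c *: proj Vs i a + proj Vs i b.
Proof.
move=> hD; case: (hD) => hs hd _.
have [s [x hx]] := hd a; have [t [y hy]] := hd b.
pose u := undup (s ++ t).
have uu : uniq u by apply: undup_uniq.
have su : {subset s <= u} by move=> j js; rewrite mem_undup mem_cat js.
have tu : {subset t <= u} by move=> j js; rewrite mem_undup mem_cat js orbT.
have e : c *: a + b = \sum_(j <- u) (c *: proj Vs j a + proj Vs j b).
  rewrite big_split /= -scaler_sumr -(proj_recon hD hx uu su) -(proj_recon hD hy uu tu) //.
rewrite e proj_sum //; last by move=> j _; apply: (hs j).2; apply: proj_in.
case iu : (i \in u) => //.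
rewrite (proj_supp hD hx) ?(proj_supp hD hy) ?scaler0 ?addr0 //.
  by apply/negP => /tu; rewrite iu.
by apply/negP => /su; rewrite iu.
Qed.

Lemma proj_zero (k : fieldType) (V : lmodType k) (I : eqType) (Vs : I -> V -> Prop) a :
  DS Vs -> (forall i, proj Vs i a = 0) -> a = 0.
Proof.
move=> hD h; case: (hD) => _ hd _; have [s [x hx]] := hd a.
rewrite (proj_recon hD hx (undup_uniq s)); last by move=> j; rewrite mem_undup.
by rewrite big1 // => j _.
Qed.
Lemma inspan0 (k : fieldType) (A : algType k) (D : cdga_data A) (P : pred (expo D)) : inspan (D:=D) P 0.
Proof. by exists [::], (fun _ => 0); rewrite big_nil. Qed.

Lemma inspan_lin (k : fieldType) (A : algType k) (D : cdga_data A) (P : pred (expo D)) (c : k) a b :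
  inspan (D:=D) P a -> inspan (D:=D) P b -> inspan (D:=D) P (c *: a + b).
Proof.
case=> s1 [c1 [h1 ->]] [s2 [c2 [h2 ->]]].
pose u := undup (s1 ++ s2).
have uu : uniq u by apply: undup_uniq.
have su : {subset s1 <= u} by move=> j js; rewrite mem_undup mem_cat js.
have tu : {subset s2 <= u} by move=> j js; rewrite mem_undup mem_cat js orbT.
exists u, (fun e => c * (c1 e *+ count_mem e s1) + c2 e *+ count_mem e s2); split.
  apply/allP => e; rewrite mem_undup mem_cat => /orP [] he.
    by move/allP: h1; apply.
  by move/allP: h2; apply.
rewrite (sum_count _ uu su) (sum_count _ uu tu) scaler_sumr -big_split /=.
apply: eq_bigr => e _; by rewrite !scalerMnl scalerA scalerDl.
Qed.

Lemma inspan_add (k : fieldType) (A : algType k) (D : cdga_data A) (P : pred (expo D)) a b :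
  inspan (D:=D) P a -> inspan (D:=D) P b -> inspan (D:=D) P (a + b).
Proof. by move=> ha hb; rewrite -[a]scale1r; apply: inspan_lin. Qed.

Lemma inspan_scale (k : fieldType) (A : algType k) (D : cdga_data A) (P : pred (expo D)) (c : k) a :
  inspan (D:=D) P a -> inspan (D:=D) P (c *: a).
Proof. by move=> ha; rewrite -[_ *: _]addr0; apply: inspan_lin => //; apply: inspan0. Qed.

Lemma inspan_sum (k : fieldType) (A : algType k) (D : cdga_data A) (P : pred (expo D)) (J : eqType)
  (s : seq J) (Q : pred J) (F : J -> A) :
  (forall j, j \in s -> Q j -> inspan (D:=D) P (F j)) -> inspan (D:=D) P (\sum_(j <- s | Q j) F j).
Proof.
move=> hF; rewrite big_seq_cond; apply: big_ind.
- exact: inspan0.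
- by move=> x y; apply: inspan_add.
- by move=> j /andP [] /hF.
Qed.

Lemma inspan_mono (k : fieldType) (A : algType k) (D : cdga_data A) (P : pred (expo D)) e :
  P e -> inspan (D:=D) P (mono e).
Proof.
move=> he; exists [:: e], (fun _ => 1); split; first by rewrite /= he.
by rewrite big_seq1 scale1r.
Qed.

Lemma inspan_imp (k : fieldType) (A : algType k) (D : cdga_data A) (P Q : pred (expo D)) a :
  (forall e, P e -> Q e) -> inspan (D:=D) P a -> inspan (D:=D) Q a.
Proof.
move=> hPQ [s [c [hs ->]]]; exists s, c; split => //.
by apply/allP => e /(allP hs) /hPQ.
Qed.

Lemma Wf_mono (k : fieldType) (A : algType k) (D : cdga_data A) m m' n a :
  m <= m' -> Wf D m n a -> Wf D m' n a.
Proof.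
move=> hm; apply: inspan_imp => e /and3P [h1 h2 h3].
by rewrite h1 h2 (le_trans h3 hm).
Qed.

Lemma Wf_hom (k : fieldType) (A : algType k) (D : cdga_data A) m n a :
  Wf D m n a -> Defs.hom D n a.
Proof. by apply: inspan_imp => e /and3P [h1 h2 h3]; rewrite h1 h2. Qed.

Lemma d_lin (k : fieldType) (A : algType k) (D : cdga_data A) r :
  diff_cof D r -> forall (c : k) a b, dif D (c *: a + b) = c *: dif D a + dif D b.
Proof. by case. Qed.

Lemma d0 (k : fieldType) (A : algType k) (D : cdga_data A) r :
  diff_cof D r -> dif D 0 = 0.
Proof.
move=> h; have e := d_lin h 1 0 0; rewrite !scale1r addr0 in e.
by apply: (@addrI _ (dif D 0)); rewrite addr0 -e.
Qed.

Lemma d_scale (k : fieldType) (A : algType k) (D : cdga_data A) r c a :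
  diff_cof D r -> dif D (c *: a) = c *: dif D a.
Proof. by move=> h; rewrite -[c *: a]addr0 (d_lin h) (d0 h) addr0. Qed.

Lemma d_add (k : fieldType) (A : algType k) (D : cdga_data A) r a b :
  diff_cof D r -> dif D (a + b) = dif D a + dif D b.
Proof. by move=> h; have := d_lin h 1 a b; rewrite !scale1r. Qed.

Lemma d_opp (k : fieldType) (A : algType k) (D : cdga_data A) r a :
  diff_cof D r -> dif D (- a) = - dif D a.
Proof. by move=> h; rewrite -scaleN1r (d_scale _ _ h) scaleN1r. Qed.

Lemma d_sub (k : fieldType) (A : algType k) (D : cdga_data A) r a b :
  diff_cof D r -> dif D (a - b) = dif D a - dif D b.
Proof. by move=> h; rewrite (d_add _ _ h) (d_opp _ h). Qed.

Lemma d_sum (k : fieldType) (A : algType k) (D : cdga_data A) r (J : Type)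
  (s : seq J) (Q : pred J) (F : J -> A) :
  diff_cof D r -> dif D (\sum_(j <- s | Q j) F j) = \sum_(j <- s | Q j) dif D (F j).
Proof.
move=> h; elim: s => [|x s IH]; first by rewrite !big_nil (d0 h).
rewrite !big_cons; case: (Q x) => //; by rewrite (d_add _ _ h) IH.
Qed.
Definition sgn (k : fieldType) (c : k) := c ^+ 2 = 1.

Lemma sgn1 (k : fieldType) : sgn (1 : k).
Proof. by rewrite /sgn expr1n. Qed.

Lemma sgnM (k : fieldType) (c c' : k) : sgn c -> sgn c' -> sgn (c * c').
Proof. by rewrite /sgn exprMn => -> ->; rewrite mulr1. Qed.

Lemma sgnN1 (k : fieldType) n : sgn ((-1) ^+ n : k).
Proof. by rewrite /sgn -exprM mulnC exprM sqrrN expr1n expr1n. Qed.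

Definition Pm (k : fieldType) (A : algType k) (D : cdga_data A)
  (s : seq 'I_(ngen D)) (e : 'I_(ngen D) -> nat) : A :=
  \prod_(i <- s) gen D i ^+ e i.

Lemma gcP (k : fieldType) (A : algType k) (D : cdga_data A) :
  free_gc D -> forall i j, exists c : k, sgn c /\ gen D i * gen D j = c *: (gen D j * gen D i).
Proof. by case=> h _ _ i j; exists ((-1) ^+ (gdeg D i * gdeg D j)); split; [apply: sgnN1|]. Qed.

Lemma C0 (k : fieldType) (A : algType k) (D : cdga_data A) :
  free_gc D -> forall i j b, exists c : k,
    sgn c /\ gen D j * gen D i ^+ b = c *: (gen D i ^+ b * gen D j).
Proof.
move=> h i j; elim=> [|b [c [hc e]]].
  by exists 1; split; [apply: sgn1| rewrite expr0 mulr1 mul1r scale1r].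
have [c' [hc' e']] := gcP h j i.
exists (c * c'); split; first by apply: sgnM.
rewrite exprSr mulrA e -scalerAl -(mulrA (gen D i ^+ b) (gen D j)) e' scalerAr scalerA.
by rewrite -scalerAr mulrA.
Qed.

Lemma C1 (k : fieldType) (A : algType k) (D : cdga_data A) :
  free_gc D -> forall i j a b, exists c : k,
    sgn c /\ gen D j ^+ a * gen D i ^+ b = c *: (gen D i ^+ b * gen D j ^+ a).
Proof.
move=> h i j; elim=> [|a IH] b.
  by exists 1; split; [apply: sgn1| rewrite expr0 mulr1 mul1r scale1r].
have [c [hc e]] := IH b; have [c' [hc' e']] := C0 h i j b.
exists (c * c'); split; first by apply: sgnM.
rewrite exprS -mulrA e -scalerAr (mulrA (gen D j)) e' -scalerAl scalerA.
by rewrite -mulrA.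
Qed.

Lemma C2 (k : fieldType) (A : algType k) (D : cdga_data A) :
  free_gc D -> forall s e i b, exists c : k,
    sgn c /\ Pm (D:=D) s e * gen D i ^+ b = c *: (gen D i ^+ b * Pm (D:=D) s e).
Proof.
move=> h s e i b; elim: s => [|j s [c [hc E]]].
  by exists 1; split; [apply: sgn1| rewrite /Pm big_nil mulr1 mul1r scale1r].
have [c' [hc' e']] := C1 h i j (e j) b.
exists (c * c'); split; first by apply: sgnM.
rewrite /Pm big_cons -/(Pm (D:=D) s e) -mulrA E -scalerAr (mulrA (gen D j ^+ e j)) e'.
by rewrite -scalerAl scalerA -mulrA.
Qed.

Lemma C3 (k : fieldType) (A : algType k) (D : cdga_data A) :
  free_gc D -> forall s e f, exists c : k,
    sgn c /\ Pm (D:=D) s e * Pm (D:=D) s f = c *: Pm (D:=D) s (fun i => e i + f i).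
Proof.
move=> h s e f; elim: s => [|j s [c [hc E]]].
  by exists 1; split; [apply: sgn1| rewrite /Pm !big_nil mulr1 scale1r].
have [c' [hc' e']] := C2 h s e j (f j).
exists (c * c'); split; first by apply: sgnM.
rewrite /Pm !big_cons -/(Pm (D:=D) s e) -/(Pm (D:=D) s f) -/(Pm (D:=D) s _).
rewrite -mulrA (mulrA (Pm (D:=D) s e)) e' -scalerAl -scalerAr -(mulrA (gen D j ^+ f j)) E.
rewrite -scalerAr -scalerAr scalerA mulrA -exprD.
by rewrite mulrC.
Qed.
Definition eadd (k : fieldType) (A : algType k) (D : cdga_data A) (e f : expo D) : expo D :=
  [ffun i => e i + f i].

Lemma mono_mul (k : fieldType) (A : algType k) (D : cdga_data A) (e f : expo D) :
  free_gc D -> exists c : k, sgn c /\ mono e * mono f = c *: mono (eadd e f).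
Proof.
move=> h; have [c [hc E]] := C3 h (index_enum 'I_(ngen D)) e f.
exists c; split => //; rewrite /mono; move: E; rewrite /Pm => ->; congr (_ *: _).
by apply: eq_bigr => i _; rewrite ffunE.
Qed.

Lemma sq_odd0 (k : fieldType) (A : algType k) (D : cdga_data A) i :
  [pchar k] =i pred0 -> free_gc D -> odd (gdeg D i) -> gen D i * gen D i = 0.
Proof.
move=> ch [h _ _] oi; have := h i i; rewrite -signr_odd oddM oi /= expr1 scaleN1r => e.
have : (2%:R : k) *: (gen D i * gen D i) = 0.
  by rewrite scaler_nat mulr2n {1}e addNr.
move/eqP; rewrite scaler_eq0 => /orP [|/eqP //].
by move/pcharf0P: ch => ->.
Qed.

Lemma Pm_zero (k : fieldType) (A : algType k) (D : cdga_data A) s g i :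
  i \in s -> gen D i ^+ g i = 0 -> Pm (D:=D) s g = 0.
Proof.
rewrite /Pm; elim: s => [//|j s IH]; rewrite in_cons big_cons => /orP [/eqP <- -> |his hz].
  by rewrite mul0r.
by rewrite IH ?mulr0.
Qed.

Lemma mono_nadm (k : fieldType) (A : algType k) (D : cdga_data A) (e : expo D) :
  [pchar k] =i pred0 -> free_gc D -> ~~ adm e -> mono e = 0.
Proof.
move=> ch h; rewrite /adm => /forallPn [i]; rewrite negb_imply => /andP [oi ei].
rewrite -ltnNge in ei; rewrite /mono.
rewrite -[\prod_(_ < _) _]/(Pm (D:=D) (index_enum 'I_(ngen D)) e).
apply: (Pm_zero (i := i)); first by rewrite mem_index_enum.
rewrite -(subnK ei) exprD expr2 (sq_odd0 ch h oi) mulr0 //.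
Qed.

Lemma mdeg_add (k : fieldType) (A : algType k) (D : cdga_data A) (e f : expo D) :
  mdeg (eadd e f) = mdeg e + mdeg f.
Proof.
rewrite /mdeg -PoszD -big_split /=; congr Posz; apply: eq_bigr => i _.
by rewrite ffunE mulnDl.
Qed.

Lemma mwt_add (k : fieldType) (A : algType k) (D : cdga_data A) (e f : expo D) :
  mwt (eadd e f) = mwt e + mwt f.
Proof.
rewrite /mwt -big_split /=; apply: eq_bigr => i _.
by rewrite ffunE PoszD mulrDl.
Qed.

Lemma inspan_mul (k : fieldType) (A : algType k) (D : cdga_data A) (P1 P2 P3 : pred (expo D)) a b :
  [pchar k] =i pred0 -> free_gc D ->
  (forall e f, P1 e -> P2 f -> adm (eadd e f) -> P3 (eadd e f)) ->
  inspan (D:=D) P1 a -> inspan (D:=D) P2 b -> inspan (D:=D) P3 (a * b).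
Proof.
move=> ch h hP [s [c [hs ->]]] [t [c' [ht ->]]].
rewrite mulr_suml; apply: inspan_sum => e es _; rewrite mulr_sumr.
apply: inspan_sum => f ft _.
rewrite -scalerAl -scalerAr scalerA; apply: inspan_scale.
have [c2 [_ ->]] := mono_mul e f h; apply: inspan_scale.
case ha : (adm (eadd e f)).
  by apply: inspan_mono; apply: hP => //; [apply: (allP hs) | apply: (allP ht)].
by rewrite mono_nadm ?ha //; apply: inspan0.
Qed.

Lemma Wf_mul (k : fieldType) (A : algType k) (D : cdga_data A) m n m' n' a b :
  [pchar k] =i pred0 -> free_gc D ->
  Wf D m n a -> Wf D m' n' b -> Wf D (m + m') (n + n') (a * b).
Proof.
move=> ch h; apply: inspan_mul => // e f /and3P [_ /eqP he we] /and3P [_ /eqP hf wf] ha.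
by rewrite ha mdeg_add mwt_add he hf eqxx lerD.
Qed.

Lemma hom_mul (k : fieldType) (A : algType k) (D : cdga_data A) n n' a b :
  [pchar k] =i pred0 -> free_gc D ->
  Defs.hom D n a -> Defs.hom D n' b -> Defs.hom D (n + n') (a * b).
Proof.
move=> ch h; apply: inspan_mul => // e f /andP [_ /eqP he] /andP [_ /eqP hf] ha.
by rewrite ha mdeg_add he hf eqxx.
Qed.
Definition delta (k : fieldType) (A : algType k) (D : cdga_data A) (j : 'I_(ngen D)) : expo D :=
  [ffun i => nat_of_bool (i == j)].

Lemma Pm_delta (k : fieldType) (A : algType k) (D : cdga_data A) j s :
  uniq s -> Pm (D:=D) s (delta j) = if j \in s then gen D j else 1.
Proof.
rewrite /Pm; elim: s => [|i s IH]; first by rewrite big_nil.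
rewrite /= big_cons in_cons ffunE => /andP [his us]; rewrite IH //.
case: (eqVneq i j) => [eij | nij] /=.
  by subst i; rewrite (negbTE his) expr1 mulr1.
by rewrite expr0 mul1r.
Qed.

Lemma Wf_eq (k : fieldType) (A : algType k) (D : cdga_data A) m m' n n' a :
  m = m' -> n = n' -> Wf D m n a -> Wf D m' n' a.
Proof. by move=> -> ->. Qed.

Lemma gen_Wf (k : fieldType) (A : algType k) (D : cdga_data A) j :
  Wf D (gwt D j) (gdeg D j)%:Z (gen D j).
Proof.
have -> : gen D j = mono (delta j).
  rewrite /mono -[\prod_(_ < _) _]/(Pm (D:=D) (index_enum 'I_(ngen D)) (delta j)).
  by rewrite Pm_delta ?index_enum_uniq // mem_index_enum.
apply: inspan_mono; apply/and3P; split.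
- by apply/forallP => i; apply/implyP => _; rewrite ffunE leq_b1.
- rewrite /mdeg (bigD1 j) //= big1 ?ffunE ?eqxx ?mul1n ?addn0 //.
  by move=> i nij; rewrite ffunE (negbTE nij).
- rewrite /mwt (bigD1 j) //= big1 ?ffunE ?eqxx ?mul1r ?addr0 //.
  by move=> i nij; rewrite ffunE (negbTE nij) mul0r.
Qed.

Definition zexp (k : fieldType) (A : algType k) (D : cdga_data A) : expo D := [ffun => 0%N].

Lemma one_Wf (k : fieldType) (A : algType k) (D : cdga_data A) : Wf D 0 0 1.
Proof.
have -> : (1 : A) = mono (zexp D).
  by rewrite /mono big1 // => i _; rewrite ffunE expr0.
apply: inspan_mono; apply/and3P; split.
- by apply/forallP => i; apply/implyP => _; rewrite ffunE.
- by rewrite /mdeg big1 // => i _; rewrite ffunE.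
- by rewrite /mwt big1 // => i _; rewrite ffunE mul0r.
Qed.
Definition Gd (k : fieldType) (A : algType k) (D : cdga_data A) (r : nat) (m : int) (n : nat) (x : A) :=
  Wf D m n%:Z x /\ Wf D (m - r%:Z) (n.+1)%:Z (dif D x).

Lemma Gd_eq (k : fieldType) (A : algType k) (D : cdga_data A) r m m' n n' x :
  m = m' -> n = n' -> Gd D r m n x -> Gd D r m' n' x.
Proof. by move=> -> ->. Qed.

Lemma Wf_add (k : fieldType) (A : algType k) (D : cdga_data A) m n a b :
  Wf D m n a -> Wf D m n b -> Wf D m n (a + b).
Proof. exact: inspan_add. Qed.

Lemma Wf_scale (k : fieldType) (A : algType k) (D : cdga_data A) m n c a :
  Wf D m n a -> Wf D m n (c *: a).
Proof. exact: inspan_scale. Qed.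

Lemma Wf0 (k : fieldType) (A : algType k) (D : cdga_data A) m n : Wf D m n 0.
Proof. exact: inspan0. Qed.

Lemma d1 (k : fieldType) (A : algType k) (D : cdga_data A) r :
  diff_cof D r -> dif D 1 = 0.
Proof.
case=> _ hl _ _; have e := hl 0%N 1 1 (Wf_hom (one_Wf D)).
rewrite !mulr1 expr0 scale1r mul1r in e.
by apply: (@addrI _ (dif D 1)); rewrite addr0 -e.
Qed.

Lemma Gd_mul (k : fieldType) (A : algType k) (D : cdga_data A) r m n m' n' x y :
  [pchar k] =i pred0 -> free_gc D -> diff_cof D r ->
  Gd D r m n x -> Gd D r m' n' y -> Gd D r (m + m') (n + n') (x * y).
Proof.
move=> ch h hd [hx dx] [hy dy]; split.
  by rewrite PoszD; apply: Wf_mul.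
case: (hd) => _ hl _ _; rewrite (hl n x y (Wf_hom hx)).
apply: Wf_add.
  apply: Wf_eq (Wf_mul ch h dx hy); first by rewrite addrAC.
  by lia.
apply: Wf_scale; apply: Wf_eq (Wf_mul ch h hx dy); first by rewrite addrA.
by lia.
Qed.

Lemma Gd_1 (k : fieldType) (A : algType k) (D : cdga_data A) r :
  diff_cof D r -> Gd D r 0 0 1.
Proof. by move=> hd; split; [apply: one_Wf | rewrite (d1 hd); apply: Wf0]. Qed.

Lemma Gd_gen (k : fieldType) (A : algType k) (D : cdga_data A) r j :
  diff_cof D r -> Gd D r (gwt D j) (gdeg D j) (gen D j).
Proof.
case=> _ _ _ hg; split; first exact: gen_Wf.
apply: inspan_imp (hg j) => e /and4P [h1 _ h3 h4].
by rewrite h1 h3 h4.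
Qed.

Lemma Gd_pow (k : fieldType) (A : algType k) (D : cdga_data A) r j a :
  [pchar k] =i pred0 -> free_gc D -> diff_cof D r ->
  Gd D r (a%:Z * gwt D j) (a * gdeg D j) (gen D j ^+ a).
Proof.
move=> ch h hd; elim: a => [|a IH].
  by rewrite mul0r mul0n expr0; apply: Gd_1.
rewrite exprS; apply: Gd_eq (Gd_mul ch h hd (Gd_gen j hd) IH).
  by rewrite -addn1 PoszD mulrDl mul1r addrC.
by rewrite mulSn.
Qed.

Lemma Gd_Pm (k : fieldType) (A : algType k) (D : cdga_data A) r s (e : 'I_(ngen D) -> nat) :
  [pchar k] =i pred0 -> free_gc D -> diff_cof D r ->
  Gd D r (\sum_(i <- s) (e i)%:Z * gwt D i) (\sum_(i <- s) e i * gdeg D i)%N (Pm (D:=D) s e).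
Proof.
move=> ch h hd; elim: s => [|i s IH].
  by rewrite /Pm !big_nil; apply: Gd_1.
rewrite /Pm !big_cons; exact: Gd_mul ch h hd (Gd_pow i (e i) ch h hd) IH.
Qed.

Lemma W7 (k : fieldType) (A : algType k) (D : cdga_data A) r m n a :
  [pchar k] =i pred0 -> free_gc D -> diff_cof D r ->
  Wf D m n a -> Wf D (m - r%:Z) (n + 1) (dif D a).
Proof.
move=> ch h hd [s [c [hs ->]]].
rewrite (d_sum _ _ _ hd); apply: inspan_sum => e es _.
rewrite (d_scale _ _ hd); apply: Wf_scale.
have /and3P [_ /eqP he hw] := allP hs e es.
have [_ G] := Gd_Pm (index_enum 'I_(ngen D)) e ch h hd.
apply: Wf_mono (_ : mwt e - r%:Z <= m - r%:Z) _; first by rewrite lerD2r.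
rewrite -he /mdeg; apply: Wf_eq G => //.
by rewrite -addn1 PoszD.
Qed.
Lemma sum_regroupf (V : nmodType) (I J : eqType) (s : seq I) (u : seq J) (f : I -> J) (x : I -> V) :
  uniq u -> (forall l, l \in s -> f l \in u) ->
  \sum_(j <- u) \sum_(l <- s | f l == j) x l = \sum_(l <- s) x l.
Proof.
move=> uu su.
under eq_bigr do rewrite big_mkcond.
rewrite exchange_big /=; apply: eq_big_seq => l ls.
rewrite -big_mkcond /=.
rewrite -[X in _ = X](_ : \sum_(j <- u | f l == j) x l = x l).
  by apply: eq_bigl => j.
by rewrite (@sum_pick _ _ u (f l) (fun _ => x l) uu) su.
Qed.

Lemma le_sum_seq (J : eqType) (t : seq J) (G : J -> int) j :
  (forall i, 0 <= G i) -> j \in t -> G j <= \sum_(i <- t) G i.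
Proof.
move=> hG; elim: t => [//|i t IH]; rewrite in_cons big_cons => /orP [/eqP -> | jt].
  by rewrite lerDl sumr_ge0.
by apply: le_trans (IH jt) _; rewrite lerDr.
Qed.

Lemma W3 (k : fieldType) (A : algType k) (D : cdga_data A) (a : A) :
  free_gc D -> exists (t : seq int) (y : int -> A) (m : int),
    [/\ uniq t, forall n, n \in t -> Wf D m n (y n) & a = \sum_(n <- t) y n].
Proof.
case=> _ _ hs; have [s [c [hadm ->]]] := hs a.
pose t := undup (map (@mdeg _ _ D) s).
exists t, (fun n => \sum_(e <- s | mdeg e == n) c e *: mono e),
  (\sum_(e <- s) `|mwt e|); split.
- exact: undup_uniq.
- move=> n _; apply: inspan_sum => e es /eqP he.
  apply: inspan_scale; apply: inspan_mono; apply/and3P; split.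
  + exact: (allP hadm).
  + by rewrite he.
  + apply: le_trans (ler_norm _) (le_sum_seq _ es) => i; exact: normr_ge0.
- rewrite sum_regroupf //; first exact: undup_uniq.
  by move=> l ls; rewrite mem_undup; apply: map_f.
Qed.
Lemma W4 (k : fieldType) (A : algType k) (D : cdga_data A) :
  free_gc D -> forall (t : seq int) (y : int -> A), uniq t ->
  (forall n, n \in t -> Defs.hom D n (y n)) -> \sum_(n <- t) y n = 0 ->
  forall n, n \in t -> y n = 0.
Proof.
case=> _ hind _ t y ut hy hsum.
pose P n (p : seq (expo D) * (expo D -> k)) :=
  all (fun e => adm e && (mdeg e == n)) p.1 /\ y n = \sum_(e <- p.1) p.2 e *: mono e.
pose rep n := epsilon (inhabits ([::] : seq (expo D), fun _ : expo D => (0 : k))) (P n).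
have hrep : forall n, n \in t -> P n (rep n).
  move=> n nt; apply: epsilon_spec; have [s [c [h1 h2]]] := hy n nt.
  by exists (s, c).
pose U := undup (flatten (map (fun n => (rep n).1) t)).
have uU : uniq U by apply: undup_uniq.
have sU : forall n, n \in t -> {subset (rep n).1 <= U}.
  move=> n nt e es; rewrite mem_undup; apply/flatten_mapP; by exists n.
have ey : forall n, n \in t ->
    y n = \sum_(e <- U) ((rep n).2 e *+ count_mem e (rep n).1) *: mono e.
  move=> n nt; have [_ ->] := hrep n nt; rewrite (sum_count _ uU (sU n nt)).
  by apply: eq_bigr => e _; rewrite scalerMnl.
pose K e := \sum_(n <- t) (rep n).2 e *+ count_mem e (rep n).1.
have hK : \sum_(e <- U) K e *: mono e = 0.
  apply: (etrans _ hsum); rewrite (eq_big_seq _ ey) exchange_big /=; apply: eq_bigr => e _.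
  by rewrite scaler_suml.
have allU : all (@adm _ _ D) U.
  apply/allP => e; rewrite mem_undup => /flatten_mapP [n nt es].
  by have [/allP /(_ e es) /andP [] ] := hrep n nt.
have K0 := hind U K uU allU hK.
move=> n0 n0t; rewrite (ey n0 n0t) big1_seq // => e /andP [_ eU].
case: (boolP (e \in (rep n0).1)) => ein; last first.
  by move/count_memPn: ein => ->; rewrite mulr0n scale0r.
have := K0 e eU; rewrite /K (bigD1_seq n0) //= big1_seq => [|n /andP [nn0 nt]].
  by rewrite addr0 => ->; rewrite scale0r.
suff /count_memPn -> : e \notin (rep n).1 by rewrite mulr0n.
apply/negP => en.
have [/allP /(_ e en) /andP [_ /eqP h1] _] := hrep n nt.
have [/allP /(_ e ein) /andP [_ /eqP h2] _] := hrep n0 n0t.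
by move: nn0; rewrite -h1 h2 eqxx.
Qed.
Lemma Zr_scale (k : fieldType) (A : algType k) (D : cdga_data A) r s p n c x :
  diff_cof D r -> Zr D s p n x -> Zr D s p n (c *: x).
Proof.
by move=> hd [h1 h2]; split; [apply: Wf_scale | rewrite (d_scale _ _ hd); apply: Wf_scale].
Qed.

Lemma Zr0 (k : fieldType) (A : algType k) (D : cdga_data A) r s p n :
  diff_cof D r -> Zr D s p n 0.
Proof. by move=> hd; split; [apply: Wf0 | rewrite (d0 hd); apply: Wf0]. Qed.

Lemma Br0 (k : fieldType) (A : algType k) (D : cdga_data A) r p n :
  diff_cof D r -> Br D r p n 0.
Proof.
move=> hd; exists 0, 0; split; first exact: Zr0 hd.
by split; [apply: Zr0 hd | rewrite (d0 hd) addr0].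
Qed.

Lemma Br_scale (k : fieldType) (A : algType k) (D : cdga_data A) r p n c x :
  diff_cof D r -> Br D r p n x -> Br D r p n (c *: x).
Proof.
move=> hd [z1 [z2 [h1 [h2 ->]]]]; exists (c *: z1), (c *: z2).
split; first exact: Zr_scale hd h1.
by split; [apply: Zr_scale hd h2 | rewrite scalerDr (d_scale _ _ hd)].
Qed.

Lemma bigrading_EAut (k : fieldType) (A : algType k) (D : cdga_data A) r (al : k) :
  diff_cof D r -> al != 0 -> EAut D r (bigrading (A:=A) r al).
Proof.
move=> hd a0; rewrite /bigrading; split.
- by move=> p n x hx; apply: Zr_scale hd hx.
- move=> p n c x y _ _.
  rewrite scalerDr !scalerA mulrC subrr; exact: Br0.
- by move=> p n x hx; apply: Br_scale hd hx.
- move=> p n x _ hx.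
  have -> : x = (al ^ (n * r%:Z + p))^-1 *: (al ^ (n * r%:Z + p) *: x).
    by rewrite scalerA mulVf ?scale1r // expfz_neq0.
  exact: Br_scale hd hx.
split.
- move=> p n y hy; exists ((al ^ (n * r%:Z + p))^-1 *: y); split; first exact: Zr_scale hd hy.
  by rewrite scalerA divff ?scale1r ?subrr ?expfz_neq0 //; apply: Br0.
- move=> p n p' n' x y _ _.
  rewrite -scalerAl -scalerAr scalerA -expfzDr //.
  have -> : n * r%:Z + p + (n' * r%:Z + p') = (n + n') * r%:Z + (p + p') by ring.
  by rewrite subrr; apply: Br0.
- by rewrite mul0r add0r expr0z scale1r subrr; apply: Br0.
- move=> p n x _; rewrite (d_scale _ _ hd).
  have -> : (n + 1) * r%:Z + (p - r%:Z) = n * r%:Z + p by ring.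
  by rewrite subrr; apply: Br0.
Qed.

Lemma two_ok (k : fieldType) :
  [pchar k] =i pred0 -> (2%:R : k) != 0 /\ (forall m : nat, (0 < m)%N -> (2%:R : k) ^+ m != 1).
Proof.
move/pcharf0P => ch; split; first by rewrite ch.
move=> [//|m] _; apply/negP => /eqP e.
have : ((2 ^ m.+1 - 1)%N%:R : k) == 0 by rewrite natrB ?expn_gt0 // natrX e subrr.
rewrite ch => /eqP; rewrite expnS.
have := expn_gt0 2 m; lia.
Qed.

Lemma two_three (k : fieldType) (A : algType k) (D : cdga_data A) r :
  [pchar k] =i pred0 -> diff_cof D r -> Er_surjective D r -> bigrading_lift D r.
Proof.
move=> ch hd hs; have [h0 h1] := two_ok ch.
exists 2%:R; split => //; apply: hs; exact: bigrading_EAut.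
Qed.
Definition islin (k : fieldType) (A : lmodType k) (f : A -> A) :=
  forall (c : k) a b, f (c *: a + b) = c *: f a + f b.

Lemma lin0 (k : fieldType) (A : lmodType k) (f : A -> A) : islin f -> f 0 = 0.
Proof.
move=> h; have e := h 1 0 0; rewrite !scale1r addr0 in e.
by apply: (@addrI _ (f 0)); rewrite addr0 -e.
Qed.

Lemma lin_scale (k : fieldType) (A : lmodType k) (f : A -> A) c a :
  islin f -> f (c *: a) = c *: f a.
Proof. by move=> h; rewrite -[c *: a]addr0 h (lin0 h) addr0. Qed.

Lemma lin_add (k : fieldType) (A : lmodType k) (f : A -> A) a b :
  islin f -> f (a + b) = f a + f b.
Proof. by move=> h; have := h 1 a b; rewrite !scale1r. Qed.

Lemma lin_sub (k : fieldType) (A : lmodType k) (f : A -> A) a b :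
  islin f -> f (a - b) = f a - f b.
Proof. by move=> h; rewrite (lin_add _ _ h) -scaleN1r (lin_scale _ _ h) scaleN1r. Qed.

Lemma lin_sum (k : fieldType) (A : lmodType k) (f : A -> A) (J : Type)
  (s : seq J) (Q : pred J) (F : J -> A) :
  islin f -> f (\sum_(j <- s | Q j) F j) = \sum_(j <- s | Q j) f (F j).
Proof.
move=> h; elim: s => [|x s IH]; first by rewrite !big_nil (lin0 h).
rewrite !big_cons; case: (Q x) => //; by rewrite (lin_add _ _ h) IH.
Qed.

Lemma lam_inj (k : fieldType) (al : k) (z1 z2 : int) :
  al != 0 -> (forall m : nat, (0 < m)%N -> al ^+ m != 1) -> al ^ z1 = al ^ z2 -> z1 = z2.
Proof.
move=> a0 nr e.
have e1 : al ^ (z1 - z2) = 1.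
  by rewrite expfzDr // e -expfzDr // subrr expr0z.
apply/eqP; rewrite -subr_eq0; apply/eqP; move: e1.
case: (z1 - z2) => [[|m]|m] //.
  by move=> e2; have := nr m.+1 isT; rewrite exprnP e2 eqxx.
rewrite NegzE -exprz_inv => e2.
have : (al^-1) ^+ m.+1 = 1 by rewrite exprnP.
rewrite exprVn => /eqP; rewrite invr_eq1 => /eqP e3.
by have := nr m.+1 isT; rewrite e3 eqxx.
Qed.
Lemma EI (k : fieldType) (A : lmodType k) (I : eqType) (L : A -> A) (mu : I -> k) :
  islin L -> forall (s : seq I) (x : I -> A), uniq s ->
  {in s &, injective mu} -> (forall i, i \in s -> L (x i) = mu i *: x i) ->
  \sum_(i <- s) x i = 0 -> forall i, i \in s -> x i = 0.
Proof.
move=> hL; elim=> [//|j s IH] x /= /andP [js us] hmu hx hs.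
have hs' : \sum_(i <- s) (mu i - mu j) *: x i = 0.
  have := congr1 (fun v => L v - mu j *: v) hs; rewrite /= (lin0 hL) scaler0 subrr.
  rewrite big_cons (lin_add _ _ hL) (lin_sum _ _ _ hL) hx ?mem_head // scalerDr.
  rewrite opprD addrACA subrr add0r scaler_sumr -sumrB => e; apply: (etrans _ e); apply: eq_big_seq => i iins.
  by rewrite hx ?in_cons ?iins ?orbT // scalerBl.
have hmu' : {in s &, injective mu}.
  by move=> a b ha hb; apply: hmu; rewrite in_cons ?ha ?hb orbT.
have hx' : forall i, i \in s -> L ((mu i - mu j) *: x i) = mu i *: ((mu i - mu j) *: x i).
  move=> i iins; rewrite (lin_scale _ _ hL) hx ?in_cons ?iins ?orbT //.
  by rewrite !scalerA mulrC.
have H := IH _ us hmu' hx' hs'.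
have xs0 : forall i, i \in s -> x i = 0.
  move=> i iins; have := H i iins; move/eqP; rewrite scaler_eq0 subr_eq0 => /orP [/eqP e|/eqP //].
  have ij := hmu i j; rewrite in_cons iins orbT mem_head in ij.
  by move: js; rewrite -(ij isT isT e) iins.
move=> i; rewrite in_cons => /orP [/eqP -> | /xs0 //].
move: hs; rewrite big_cons big1_seq ?addr0 // => l /andP [_ /xs0 //].
Qed.
Lemma stepA (k : fieldType) (A : algType k) (D : cdga_data A) r (al : k) (Phi : A -> A) p n x :
  [pchar k] =i pred0 -> free_gc D -> diff_cof D r ->
  induces D r Phi (bigrading r al) ->
  Wf D p n x -> Wf D (p - 1) n (Phi x - al ^ (n * r%:Z + p) *: x).
Proof.
move=> ch h hd hi hx.
have Z : Zr D r%:Z p n x by split => //; apply: W7.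
have := hi p n x Z; rewrite /bigrading => -[z1 [z2 [[h1 _] [[h2 _] ->]]]].
apply: Wf_add h1 _; apply: Wf_eq (W7 ch h hd h2); ring.
Qed.

Lemma Wf_sub (k : fieldType) (A : algType k) (D : cdga_data A) m n a b :
  Wf D m n a -> Wf D m n b -> Wf D m n (a - b).
Proof. by move=> ha hb; apply: Wf_add => //; rewrite -scaleN1r; apply: Wf_scale. Qed.

Lemma Wf_sum (k : fieldType) (A : algType k) (D : cdga_data A) m n (J : eqType)
  (s : seq J) (Q : pred J) (F : J -> A) :
  (forall j, j \in s -> Q j -> Wf D m n (F j)) -> Wf D m n (\sum_(j <- s | Q j) F j).
Proof. exact: inspan_sum. Qed.

Definition eigdec (k : fieldType) (A : algType k) (D : cdga_data A) r (al : k) (Phi : A -> A)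
  (m n : int) (x : A) (s : seq int) (xs : int -> A) :=
  (forall p, p \in s -> [/\ p <= m, Wf D p n (xs p) & Phi (xs p) = al ^ (n * r%:Z + p) *: xs p])
  /\ x = \sum_(p <- s) xs p.

Lemma stepB (k : fieldType) (A : algType k) (D : cdga_data A) r (al : k) (Phi : A -> A) n q :
  [pchar k] =i pred0 -> free_gc D -> diff_cof D r ->
  al != 0 -> (forall m : nat, (0 < m)%N -> al ^+ m != 1) ->
  islin Phi -> (forall m a, Wf D m n (Phi a) <-> Wf D m n a) ->
  induces D r Phi (bigrading r al) ->
  (forall a, Wf D q n a -> a = 0) ->
  forall K : nat, forall m x, m <= q + K%:Z -> Wf D m n x ->
  exists s xs, eigdec D r al Phi m n x s xs.
Proof.
move=> ch h hd a0 nr hl hW hi hq; elim=> [|K IH] m x hm hx.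
  exists [::], (fun _ => 0); split => //.
  by rewrite big_nil; apply: hq; apply: Wf_mono hx; rewrite addr0 in hm.
pose lam p := al ^ (n * r%:Z + p).
have hy := stepA ch h hd hi hx.
have hm' : m - 1 <= q + K%:Z.
  by move: hm; rewrite -addn1 PoszD; lia.
have [s [ys [hys ey]]] := IH _ _ hm' hy.
have neq : forall p, p \in s -> lam p - lam m != 0.
  move=> p ps; rewrite subr_eq0; apply/negP => /eqP e.
  have := lam_inj a0 nr e => /addrI ep.
  by have [hp _ _] := hys p ps; move: hp; rewrite ep; lia.
pose xs' p := (lam p - lam m)^-1 *: ys p.
pose xm := x - \sum_(p <- s) xs' p.
exists (m :: s), (fun p => if p == m then xm else xs' p).
have sne : forall p, p \in s -> (p == m) = false.
  move=> p ps; apply/negP => /eqP e; have [hp _ _] := hys p ps; move: hp.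
  by rewrite e; lia.
split; last first.
  rewrite big_cons eqxx (eq_big_seq xs') ?subrK // => p ps; by rewrite sne.
move=> p; rewrite in_cons => /orP [/eqP -> | ps]; last first.
  rewrite sne //; have [hp h2 h3] := hys p ps; split.
  - by move: hp; lia.
  - exact: Wf_scale.
  - by rewrite /xs' (lin_scale _ _ hl) h3 !scalerA mulrC.
rewrite eqxx; split => //.
- apply: Wf_sub hx _; apply: Wf_sum => j js _; have [hp h2 _] := hys j js.
  apply: Wf_scale; apply: Wf_mono h2; move: hp; lia.
- rewrite /xm (lin_sub _ _ hl) (lin_sum _ _ _ hl).
  have E1 : \sum_(j <- s) Phi (xs' j) = \sum_(j <- s) (lam m *: xs' j + ys j).
    apply: eq_big_seq => j js; have [_ _ h3] := hys j js.
    rewrite /xs' (lin_scale _ _ hl) h3 !scalerA -[X in _ = _ + X]scale1r -scalerDl.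
    congr (_ *: _); have := neq j js; rewrite /lam => nz; field.
    exact: nz.
  rewrite E1 big_split /= -scaler_sumr -ey scalerBr.
  by rewrite /lam opprD opprB addrCA [Phi x + _]addrC subrK addrC.
Qed.
Definition Ssp (k : fieldType) (A : algType k) (D : cdga_data A) r (al : k) (Phi : A -> A)
  (P Q : int) (a : A) :=
  Wf D (- P) (P + Q) a /\ Phi a = al ^ ((P + Q) * r%:Z + - P) *: a.

Lemma S_pn (k : fieldType) (A : algType k) (D : cdga_data A) r (al : k) (Phi : A -> A) p n z :
  Ssp D r al Phi (- p) (n + p) z <-> Wf D p n z /\ Phi z = al ^ (n * r%:Z + p) *: z.
Proof.
rewrite /Ssp opprK; have -> : - p + (n + p) = n by ring.
by [].
Qed.

Lemma decW (k : fieldType) (A : algType k) (D : cdga_data A) r (al : k) (Phi : A -> A) :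
  [pchar k] =i pred0 -> free_gc D -> diff_cof D r -> regularW D ->
  al != 0 -> (forall m : nat, (0 < m)%N -> al ^+ m != 1) ->
  WAut D Phi -> induces D r Phi (bigrading r al) ->
  forall m n x, Wf D m n x -> exists s xs, eigdec D r al Phi m n x s xs.
Proof.
move=> ch h hd hreg a0 nr [hl _ _ _ hW] hi m n x hx.
have [q hq] := hreg n.
have hK : m <= q + (`|m - q|%N)%:Z by lia.
exact: (stepB ch h hd a0 nr hl (fun m a => hW m n a) hi hq hK hx).
Qed.

Lemma split_dec (k : fieldType) (A : algType k) (D : cdga_data A) r (al : k) (Phi : A -> A) :
  [pchar k] =i pred0 -> free_gc D -> diff_cof D r -> regularW D ->
  al != 0 -> (forall m : nat, (0 < m)%N -> al ^+ m != 1) ->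
  WAut D Phi -> induces D r Phi (bigrading r al) ->
  forall a, exists (s : seq (int * int)) (x : int * int -> A),
    (forall i, i \in s -> Ssp D r al Phi i.1 i.2 (x i)) /\ a = \sum_(i <- s) x i.
Proof.
move=> ch h hd hreg a0 nr hW hi a.
have [t [y [m [ut hy ey]]]] := W3 a h.
pose dn n := epsilon (inhabits ([::] : seq int, fun _ : int => (0 : A)))
  (fun p => eigdec D r al Phi m n (y n) p.1 p.2).
have hdn : forall n, n \in t -> eigdec D r al Phi m n (y n) (dn n).1 (dn n).2.
  move=> n nt; apply: (epsilon_spec _ (fun p => eigdec D r al Phi m n (y n) p.1 p.2)).
  have [s [xs hs]] := decW ch h hd hreg a0 nr hW hi (hy n nt).
  by exists (s, xs).
exists (flatten [seq [seq (- p, n + p) | p <- (dn n).1] | n <- t]),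
  (fun i => (dn (i.1 + i.2)).2 (- i.1)); split.
  move=> i /flatten_mapP [n nt /mapP [p ps ->]] /=.
  rewrite opprK (_ : - p + (n + p) = n); last by ring.
  apply/S_pn; have [hh _] := hdn n nt; have [_ h2 h3] := hh p ps; by split.
rewrite big_flatten /= big_map ey; apply: eq_big_seq => n nt.
rewrite big_map; have [_ ->] := hdn n nt; apply: eq_bigr => p _ /=.
by rewrite opprK (_ : - p + (n + p) = n) //; ring.
Qed.

Lemma split_ind (k : fieldType) (A : algType k) (D : cdga_data A) r (al : k) (Phi : A -> A) :
  [pchar k] =i pred0 -> free_gc D -> diff_cof D r ->
  al != 0 -> (forall m : nat, (0 < m)%N -> al ^+ m != 1) ->
  WAut D Phi ->
  forall (s : seq (int * int)) (x : int * int -> A), uniq s ->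
    (forall i, i \in s -> Ssp D r al Phi i.1 i.2 (x i)) -> \sum_(i <- s) x i = 0 ->
    forall i, i \in s -> x i = 0.
Proof.
move=> ch h hd a0 nr [hl _ _ _ _] s x us hx hs i0 i0s.
pose deg (i : int * int) := i.1 + i.2.
pose t := undup (map deg s).
have hgrp : \sum_(n <- t) \sum_(i <- s | deg i == n) x i = 0.
  rewrite sum_regroupf //; first exact: undup_uniq.
  by move=> l ls; rewrite mem_undup; apply: map_f.
have z : \sum_(i <- filter (fun i => deg i == deg i0) s) x i = 0.
  rewrite big_filter.
  apply: (@W4 _ _ D h t (fun n => \sum_(i <- s | deg i == n) x i) (undup_uniq _) _ hgrp);
    last by rewrite mem_undup map_f.
  move=> n _; apply: inspan_sum => i iins /eqP <-.
  by have [h1 _] := hx i iins; apply: Wf_hom h1.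
have fs : i0 \in filter (fun i => deg i == deg i0) s by rewrite mem_filter eqxx.
apply: (@EI _ _ _ Phi (fun i => al ^ (deg i0 * r%:Z + - i.1)) hl
  (filter (fun i => deg i == deg i0) s) x _ _ _ z) => //.
- exact: filter_uniq.
- move=> [a b] [c d]; rewrite !mem_filter /deg /= => /andP [/eqP e1 _] /andP [/eqP e2 _] e.
  have e3 := lam_inj a0 nr e; move/addrI: e3 => /eqP; rewrite eqr_opp => /eqP e4.
  by subst c; congr pair; apply: (@addrI _ a); rewrite e1 e2.
- move=> i; rewrite mem_filter => /andP [/eqP e iins]; have [_ h2] := hx i iins.
  by rewrite h2 -/(deg i) e.
Qed.

Lemma three_one (k : fieldType) (A : algType k) (D : cdga_data A) r :
  [pchar k] =i pred0 -> fg_Er_cofibrant D r -> bigrading_lift D r -> r_splitting D r.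
Proof.
move=> ch [h [hd hreg]] [al [a0 nr [Phi [hW hi]]]].
have hW2 := hW; case: hW2 => hl [hm hone] hdc _ hWf.
exists (Ssp D r al Phi); split.
- move=> P Q; split.
    by split; [apply: Wf0 | rewrite (lin0 hl) scaler0].
  move=> c x y [hx ex] [hy ey]; split.
    by apply: Wf_add => //; apply: Wf_scale.
  by rewrite hl ex ey scalerDr !scalerA mulrC.
- exact: split_dec.
- exact: split_ind.
- move=> P Q x [hx ex]; split.
    by apply: Wf_eq (W7 ch h hd hx); ring.
  rewrite hdc ex (d_scale _ _ hd); congr (_ ^ _ *: _); ring.
split.
- move=> P Q P' Q' x y [hx ex] [hy ey]; split.
    by apply: Wf_eq (Wf_mul ch h hx hy); ring.
  rewrite hm ex ey -scalerAl -scalerAr scalerA -expfzDr //; congr (_ ^ _ *: _); ring.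
- move=> m n a; split.
    move=> ha; have [s [xs [hs ->]]] := decW ch h hd hreg a0 nr hW hi ha.
    exists s, xs; split => // p ps; have [h1 h2 h3] := hs p ps.
    by split => //; apply/S_pn.
  move=> [s [xs [hs ->]]]; apply: Wf_sum => p ps _.
  have [hp /S_pn [h2 _]] := hs p ps; exact: Wf_mono hp h2.
Qed.
Definition splitS (k : fieldType) (A : algType k) (D : cdga_data A) (r : nat)
  (S : int -> int -> A -> Prop) :=
  [/\ (forall p q, S p q 0 /\ forall (c : k) x y, S p q x -> S p q y -> S p q (c *: x + y)),
      (forall a, exists (s : seq (int * int)) (x : int * int -> A),
          (forall i, i \in s -> S i.1 i.2 (x i)) /\ a = \sum_(i <- s) x i),
      (forall (s : seq (int * int)) (x : int * int -> A), uniq s ->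
          (forall i, i \in s -> S i.1 i.2 (x i)) -> \sum_(i <- s) x i = 0 ->
          forall i, i \in s -> x i = 0),
      (forall p q x, S p q x -> S (p + r%:Z) (q - r%:Z + 1) (dif D x)) &
      [/\ (forall p q p' q' x y, S p q x -> S p' q' y -> S (p + p') (q + q') (x * y)) &
          (forall m n a, Wf D m n a <-> exists (s : seq int) (x : int -> A),
              (forall p, p \in s -> p <= m /\ S (- p) (n + p) (x p)) /\ a = \sum_(p <- s) x p)]].

Definition VS (k : fieldType) (A : algType k) (S : int -> int -> A -> Prop) :=
  fun i : int * int => S i.1 i.2.

Lemma splitDS (k : fieldType) (A : algType k) (D : cdga_data A) r S :
  splitS D r S -> DS (VS S).
Proof. by case=> h1 h2 h3 _ _; split; [move=> i; exact: h1 | exact: h2 | exact: h3]. Qed.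

Definition cnd (m n : int) (i : int * int) := (i.1 + i.2 == n) && (- i.1 <= m).

Lemma F1 (k : fieldType) (A : algType k) (D : cdga_data A) r S m n a i :
  splitS D r S -> Wf D m n a -> ~~ cnd m n i -> proj (VS S) i a = 0.
Proof.
move=> hS; have hD := splitDS hS; case: hS => _ _ _ _ [_ hW].
case/hW => s [x [hs ->]] ni.
pose t := map (fun p => (- p, n + p)) s.
have hdec : is_dec (VS S) (\sum_(p <- s) x p) t (fun j => x (- j.1)).
  split.
    move=> j /mapP [p ps ->]; rewrite /VS /= opprK; exact: (hs p ps).2.
  by rewrite big_map; apply: eq_bigr => p _ /=; rewrite opprK.
apply: (proj_supp hD hdec); apply/negP => /mapP [p ps ei].
move: ni; rewrite ei /cnd /= opprK (hs p ps).1 andbT.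
by rewrite (_ : - p + (n + p) = n) ?eqxx //; ring.
Qed.

Lemma F2 (k : fieldType) (A : algType k) (D : cdga_data A) r S m n a :
  splitS D r S -> (forall i, ~~ cnd m n i -> proj (VS S) i a = 0) -> Wf D m n a.
Proof.
move=> hS; have hD := splitDS hS; case: (hS) => _ hdec _ _ [_ hW] h.
have [s0 [x0 hx0]] := hdec a.
pose u := undup s0.
have su : {subset s0 <= undup s0} by move=> j; rewrite mem_undup.
have ea := proj_recon hD hx0 (undup_uniq s0) su.
pose u' := filter (fun i => cnd m n i) u.
have ea' : a = \sum_(i <- u') proj (VS S) i a.
  rewrite big_filter big_mkcond /= {1}ea; apply: eq_bigr => i _.
  by case: (boolP (cnd m n i)) => // /h.
apply/hW; exists (map (fun i => - i.1) u'), (fun p => proj (VS S) (- p, n + p) a).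
split.
  move=> p /mapP [i]; rewrite mem_filter => /andP [/andP [/eqP hn hm] _] ->.
  split => //; exact: (@proj_in _ _ _ (VS S) (_, _) a hD).
rewrite big_map {1}ea'; apply: eq_big_seq => i; rewrite mem_filter => /andP [/andP [/eqP hn _] _].
rewrite opprK; congr (proj _ _ a); case: i hn => a1 a2 /= <-.
by congr pair; ring.
Qed.
Lemma B_W (k : fieldType) (A : algType k) (D : cdga_data A) r p n b :
  [pchar k] =i pred0 -> free_gc D -> diff_cof D r ->
  Br D r p n b -> Wf D (p - 1) n b.
Proof.
move=> ch h hd [z1 [z2 [[h1 _] [[h2 _] ->]]]].
apply: Wf_add h1 _; apply: Wf_eq (W7 ch h hd h2); ring.
Qed.

Lemma W_B (k : fieldType) (A : algType k) (D : cdga_data A) r p n b :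
  [pchar k] =i pred0 -> free_gc D -> diff_cof D r ->
  Wf D (p - 1) n b -> Br D r p n b.
Proof.
move=> ch h hd hb; exists b, 0; split.
  split => //; apply: Wf_mono (W7 ch h hd hb); lia.
by split; [apply: Zr0 hd | rewrite (d0 hd) addr0].
Qed.

Lemma W_Zr (k : fieldType) (A : algType k) (D : cdga_data A) r p n x :
  [pchar k] =i pred0 -> free_gc D -> diff_cof D r ->
  Wf D p n x -> Zr D r%:Z p n x.
Proof. by move=> ch h hd hx; split => //; apply: W7. Qed.

Lemma proj_sub (k : fieldType) (V : lmodType k) (I : eqType) (Vs : I -> V -> Prop) i a b :
  DS Vs -> proj Vs i (a - b) = proj Vs i a - proj Vs i b.
Proof.
move=> hD; rewrite -[a - b]addrC -scaleN1r proj_lin // scaleN1r addrC //.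
Qed.

Lemma proj_proj (k : fieldType) (V : lmodType k) (I : eqType) (Vs : I -> V -> Prop) i j a :
  DS Vs -> proj Vs j (proj Vs i a) = if j == i then proj Vs i a else 0.
Proof. move=> hD; apply: proj_self => //; exact: proj_in. Qed.

Lemma Wtop (k : fieldType) (A : algType k) (D : cdga_data A) r S (i : int * int) z :
  splitS D r S -> Wf D (- i.1) (i.1 + i.2) z ->
  Wf D (- i.1 - 1) (i.1 + i.2) (z - proj (VS S) i z).
Proof.
move=> hS hz; have hD := splitDS hS; apply: (F2 hS) => j nj.
rewrite proj_sub // proj_proj //.
case: (eqVneq j i) => [-> | nji]; first by rewrite subrr.
rewrite subr0; apply: (F1 hS hz); apply: contra nj.
rewrite /cnd => /andP [e1 e2]; rewrite e1 /=.
rewrite le_eqVlt in e2; case/orP: e2 => [/eqP e2 | e2]; last by lia.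
exfalso; move/eqP: nji; apply; move: e1 => /eqP.
case: i j e2 {hz} => [i1 i2] [j1 j2] /= e2 e1.
have ej : j1 = i1 by lia.
by subst; congr pair; lia.
Qed.

Lemma Wkill (k : fieldType) (A : algType k) (D : cdga_data A) r S (i : int * int) m n z :
  splitS D r S -> Wf D m n z -> m < - i.1 -> proj (VS S) i z = 0.
Proof.
move=> hS hz hm; apply: (F1 hS hz); rewrite /cnd negb_and; apply/orP; right.
by rewrite -ltNge.
Qed.

Lemma W_S (k : fieldType) (A : algType k) (D : cdga_data A) r S (i : int * int) x :
  splitS D r S -> S i.1 i.2 x -> Wf D (- i.1) (i.1 + i.2) x.
Proof.
move=> hS hx; have hD := splitDS hS; apply: (F2 hS) => j nj.
rewrite (@proj_self _ _ _ (VS S) j i x hD hx).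
case: (eqVneq j i) => [e | //]; move: nj; rewrite e /cnd eqxx lexx //.
Qed.
Lemma sum_extend (V : nmodType) (I : eqType) (u w : seq I) (F : I -> V) :
  uniq u -> uniq w -> {subset u <= w} -> (forall i, i \in w -> i \notin u -> F i = 0) ->
  \sum_(i <- u) F i = \sum_(i <- w) F i.
Proof.
move=> uu uw suw hF; rewrite (sum_count _ uw suw); apply: eq_big_seq => i iw.
rewrite count_uniq_mem //; case: (boolP (i \in u)) => iu //.
by rewrite hF.
Qed.

Definition TT (k : fieldType) (A : algType k) (S : int -> int -> A -> Prop)
  (G : int -> int -> A -> A) (i : int * int) (y : A) : A :=
  proj (VS S) i (G (- i.1) (i.1 + i.2) y).

Definition PHI (k : fieldType) (A : algType k) (S : int -> int -> A -> Prop)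
  (G : int -> int -> A -> A) (a : A) : A :=
  \sum_(i <- undup (dch (VS S) a).1) TT S G i (proj (VS S) i a).

Lemma TT0 (k : fieldType) (A : algType k) (D : cdga_data A) r S G i :
  [pchar k] =i pred0 -> free_gc D -> diff_cof D r -> splitS D r S -> EAut D r G ->
  TT S G i 0 = 0.
Proof.
move=> ch h hd hS [_ _ hB _ _]; rewrite /TT.
have := hB (- i.1) (i.1 + i.2) 0 (Br0 (- i.1) (i.1 + i.2) hd) => /(B_W ch h hd) hw.
apply: (Wkill hS hw); lia.
Qed.

Lemma supp_dch (k : fieldType) (A : algType k) (D : cdga_data A) r S a i :
  splitS D r S -> i \notin undup (dch (VS S) a).1 -> proj (VS S) i a = 0.
Proof.
move=> hS hi; have hD := splitDS hS; case: (hD) => _ hdec _.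
have [s [x hx]] := hdec a; apply: (proj_supp hD (dch_spec hx)).
by rewrite -mem_undup.
Qed.

Lemma PHI_list (k : fieldType) (A : algType k) (D : cdga_data A) r S G a u :
  [pchar k] =i pred0 -> free_gc D -> diff_cof D r -> splitS D r S -> EAut D r G ->
  uniq u -> (forall i, i \notin u -> proj (VS S) i a = 0) ->
  PHI S G a = \sum_(i <- u) TT S G i (proj (VS S) i a).
Proof.
move=> ch h hd hS hG uu hu; rewrite /PHI.
set sup := undup _.
pose w := undup (sup ++ u).
have uw : uniq w by apply: undup_uniq.
have F0 : forall i, proj (VS S) i a = 0 -> TT S G i (proj (VS S) i a) = 0.
  by move=> i ->; apply: (TT0 i ch h hd hS hG).
rewrite (@sum_extend _ _ sup w) ?undup_uniq //; last first.
- by move=> i _ hi; apply: F0; apply: (supp_dch hS hi).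
- by move=> i hi; rewrite mem_undup mem_cat hi.
rewrite [RHS](@sum_extend _ _ u w) //.
- by move=> i hi; rewrite mem_undup mem_cat hi orbT.
- by move=> i _ hi; apply: F0; apply: hu.
Qed.
Lemma KT (k : fieldType) (A : algType k) (D : cdga_data A) r S G (i : int * int) x :
  [pchar k] =i pred0 -> free_gc D -> diff_cof D r -> splitS D r S -> EAut D r G ->
  Wf D (- i.1) (i.1 + i.2) x ->
  TT S G i (proj (VS S) i x) = proj (VS S) i (G (- i.1) (i.1 + i.2) x).
Proof.
move=> ch h hd hS [_ hl hB _ _] hx; have hD := splitDS hS; rewrite /TT.
set y := proj (VS S) i x; set w := x - y.
have hy : S i.1 i.2 y by apply: (@proj_in _ _ _ (VS S) i x hD).
have hw : Wf D (- i.1 - 1) (i.1 + i.2) w by exact: (Wtop hS hx).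
have Zy := W_Zr ch h hd (W_S hS hy).
have Zw : Zr D r%:Z (- i.1) (i.1 + i.2) w.
  by apply: W_Zr ch h hd _; apply: Wf_mono hw; lia.
have B1 := B_W ch h hd (hl _ _ 1 y w Zy Zw).
have B2 := B_W ch h hd (hB _ _ w (W_B ch h hd hw)).
have ex : 1 *: y + w = x by rewrite scale1r /w addrC subrK.
rewrite ex scale1r in B1.
have B3 := Wf_add B1 B2; rewrite opprD addrA subrK in B3.
have lt : - i.1 - 1 < - i.1 by lia.
have := Wkill hS B3 lt; rewrite proj_sub // => /eqP.
by rewrite subr_eq0 => /eqP ->.
Qed.

Lemma TT_lin (k : fieldType) (A : algType k) (D : cdga_data A) r S G (i : int * int) c y z :
  [pchar k] =i pred0 -> free_gc D -> diff_cof D r -> splitS D r S -> EAut D r G ->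
  S i.1 i.2 y -> S i.1 i.2 z -> TT S G i (c *: y + z) = c *: TT S G i y + TT S G i z.
Proof.
move=> ch h hd hS [_ hl _ _ _] hy hz; have hD := splitDS hS; rewrite /TT.
have Zy := W_Zr ch h hd (W_S hS hy); have Zz := W_Zr ch h hd (W_S hS hz).
have B1 := B_W ch h hd (hl _ _ c y z Zy Zz).
have lt : - i.1 - 1 < - i.1 by lia.
have := Wkill hS B1 lt; rewrite proj_sub // proj_lin // => /eqP.
by rewrite subr_eq0 => /eqP.
Qed.

Lemma TT_S (k : fieldType) (A : algType k) (D : cdga_data A) r S G (i : int * int) y :
  splitS D r S -> S i.1 i.2 (TT S G i y).
Proof. by move=> hS; apply: (@proj_in _ _ _ (VS S) i _ (splitDS hS)). Qed.

Lemma PHI_S (k : fieldType) (A : algType k) (D : cdga_data A) r S G (i : int * int) x :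
  [pchar k] =i pred0 -> free_gc D -> diff_cof D r -> splitS D r S -> EAut D r G ->
  S i.1 i.2 x -> PHI S G x = TT S G i x.
Proof.
move=> ch h hd hS hG hx; have hD := splitDS hS.
rewrite (@PHI_list _ _ D r S G x [:: i]) //.
  by rewrite big_seq1 (@proj_self _ _ _ (VS S) i i x hD hx) eqxx.
move=> j; rewrite inE => nj; rewrite (@proj_self _ _ _ (VS S) j i x hD hx).
by rewrite (negbTE nj).
Qed.

Lemma proj_PHI (k : fieldType) (A : algType k) (D : cdga_data A) r S G (i : int * int) a :
  [pchar k] =i pred0 -> free_gc D -> diff_cof D r -> splitS D r S -> EAut D r G ->
  proj (VS S) i (PHI S G a) = TT S G i (proj (VS S) i a).
Proof.
move=> ch h hd hS hG; have hD := splitDS hS; rewrite /PHI.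
rewrite proj_sum ?undup_uniq //; last by move=> j _; apply: TT_S hS.
case: ifP => // /negbT hi.
by rewrite (supp_dch hS hi) (TT0 i ch h hd hS hG).
Qed.

Lemma PHI_lin (k : fieldType) (A : algType k) (D : cdga_data A) r S G :
  [pchar k] =i pred0 -> free_gc D -> diff_cof D r -> splitS D r S -> EAut D r G ->
  islin (PHI S G).
Proof.
move=> ch h hd hS hG c a b; have hD := splitDS hS.
pose u := undup (undup (dch (VS S) a).1 ++ undup (dch (VS S) b).1).
have uu : uniq u by apply: undup_uniq.
have ha : forall i, i \notin u -> proj (VS S) i a = 0.
  move=> i; rewrite mem_undup mem_cat negb_or => /andP [hi _]; exact: supp_dch hS hi.
have hb : forall i, i \notin u -> proj (VS S) i b = 0.
  move=> i; rewrite mem_undup mem_cat negb_or => /andP [_ hi]; exact: supp_dch hS hi.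
rewrite !(@PHI_list _ _ D r S G _ u) //; last first.
  by move=> i hi; rewrite proj_lin // ha // hb // scaler0 addr0.
rewrite scaler_sumr -big_split /=; apply: eq_bigr => i _.
rewrite proj_lin // (TT_lin c ch h hd hS hG) //; exact: (@proj_in _ _ _ (VS S) i _ hD).
Qed.
Lemma proj0 (k : fieldType) (V : lmodType k) (I : eqType) (Vs : I -> V -> Prop) i :
  DS Vs -> proj Vs i 0 = 0.
Proof. by move=> hD; have := proj_sub i 0 0 hD; rewrite !subrr. Qed.

Lemma TT_inj (k : fieldType) (A : algType k) (D : cdga_data A) r S G (i : int * int) y :
  [pchar k] =i pred0 -> free_gc D -> diff_cof D r -> splitS D r S -> EAut D r G ->
  S i.1 i.2 y -> TT S G i y = 0 -> y = 0.
Proof.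
move=> ch h hd hS [hZ _ _ hR _] hy ht; have hD := splitDS hS.
have Zy := W_Zr ch h hd (W_S hS hy).
have [hGy _] := hZ _ _ _ Zy.
have hw := Wtop hS hGy; rewrite /TT in ht; rewrite ht subr0 in hw.
have By := B_W ch h hd (hR _ _ _ Zy (W_B ch h hd hw)).
have lt : - i.1 - 1 < - i.1 by lia.
have := Wkill hS By lt; by rewrite (@proj_self _ _ _ (VS S) i i y hD hy) eqxx.
Qed.

Lemma TT_surj (k : fieldType) (A : algType k) (D : cdga_data A) r S G (i : int * int) y :
  [pchar k] =i pred0 -> free_gc D -> diff_cof D r -> splitS D r S -> EAut D r G ->
  S i.1 i.2 y -> exists x, S i.1 i.2 x /\ TT S G i x = y.
Proof.
move=> ch h hd hS hG hy; have hD := splitDS hS; have hG' := hG.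
case: hG' => _ _ _ _ [hsu _ _ _].
have Zy := W_Zr ch h hd (W_S hS hy).
have [x0 [[hx0 _] hb]] := hsu _ _ _ Zy.
exists (proj (VS S) i x0); split; first exact: (@proj_in _ _ _ (VS S) i x0 hD).
rewrite (KT ch h hd hS hG hx0).
have lt : - i.1 - 1 < - i.1 by lia.
have := Wkill hS (B_W ch h hd hb) lt; rewrite proj_sub //.
rewrite (@proj_self _ _ _ (VS S) i i y hD hy) eqxx => /eqP; rewrite subr_eq0 => /eqP //.
Qed.

Lemma PHI_inj (k : fieldType) (A : algType k) (D : cdga_data A) r S G a :
  [pchar k] =i pred0 -> free_gc D -> diff_cof D r -> splitS D r S -> EAut D r G ->
  PHI S G a = 0 -> a = 0.
Proof.
move=> ch h hd hS hG ha; have hD := splitDS hS; apply: (proj_zero hD) => i.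
apply: (TT_inj (G := G) ch h hd hS hG); first exact: (@proj_in _ _ _ (VS S) i a hD).
by rewrite -(proj_PHI _ _ ch h hd hS hG) ha proj0.
Qed.

Lemma PHI_surj (k : fieldType) (A : algType k) (D : cdga_data A) r S G b :
  [pchar k] =i pred0 -> free_gc D -> diff_cof D r -> splitS D r S -> EAut D r G ->
  exists a, PHI S G a = b.
Proof.
move=> ch h hd hS hG; have hD := splitDS hS; case: (hD) => _ hdec _.
have [s [x hx]] := hdec b.
have su : {subset s <= undup s} by move=> j; rewrite mem_undup.
have eb := proj_recon hD hx (undup_uniq s) su.
pose pk i := epsilon (inhabits (0 : A))
  (fun z => S i.1 i.2 z /\ TT S G i z = proj (VS S) i b).
have hpk : forall i, S i.1 i.2 (pk i) /\ TT S G i (pk i) = proj (VS S) i b.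
  move=> i; apply: (epsilon_spec _ (fun z => S i.1 i.2 z /\ TT S G i z = proj (VS S) i b)).
  apply: (TT_surj ch h hd hS hG); exact: (@proj_in _ _ _ (VS S) i b hD).
exists (\sum_(i <- undup s) pk i).
rewrite (lin_sum _ _ _ (PHI_lin ch h hd hS hG)) [RHS]eb; apply: eq_bigr => i _.
have [h1 h2] := hpk i; by rewrite (PHI_S ch h hd hS hG h1).
Qed.

Lemma PHI_bij (k : fieldType) (A : algType k) (D : cdga_data A) r S G :
  [pchar k] =i pred0 -> free_gc D -> diff_cof D r -> splitS D r S -> EAut D r G ->
  bijective (PHI S G).
Proof.
move=> ch h hd hS hG.
pose g b := epsilon (inhabits (0 : A)) (fun a => PHI S G a = b).
have hg : forall b, PHI S G (g b) = b.
  move=> b; apply: (epsilon_spec _ (fun a => PHI S G a = b)).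
  exact: (PHI_surj _ ch h hd hS hG).
exists g => // a; apply/eqP; rewrite -subr_eq0; apply/eqP.
apply: (PHI_inj ch h hd hS hG); by rewrite (lin_sub _ _ (PHI_lin ch h hd hS hG)) hg subrr.
Qed.

Lemma PHI_W (k : fieldType) (A : algType k) (D : cdga_data A) r S G m n a :
  [pchar k] =i pred0 -> free_gc D -> diff_cof D r -> splitS D r S -> EAut D r G ->
  Wf D m n (PHI S G a) <-> Wf D m n a.
Proof.
move=> ch h hd hS hG; have hD := splitDS hS; split => hw; apply: (F2 hS) => i ni.
  apply: (TT_inj (G := G) ch h hd hS hG); first exact: (@proj_in _ _ _ (VS S) i a hD).
  by rewrite -(proj_PHI _ _ ch h hd hS hG); apply: (F1 hS hw).
by rewrite (proj_PHI _ _ ch h hd hS hG) (F1 hS hw ni) (TT0 i ch h hd hS hG).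
Qed.
Lemma prod_diff (R : pzRingType) (X Y U V : R) : X * Y - U * V = U * (Y - V) + (X - U) * Y.
Proof. by rewrite mulrBr mulrBl [RHS]addrC [RHS]addrA subrK. Qed.

Lemma recon (k : fieldType) (A : algType k) (D : cdga_data A) r S a :
  splitS D r S -> a = \sum_(i <- undup (dch (VS S) a).1) proj (VS S) i a.
Proof.
move=> hS; have hD := splitDS hS; case: (hD) => _ hdec _; have [s [x hx]] := hdec a.
apply: (proj_recon hD (dch_spec hx) (undup_uniq _)) => j; by rewrite mem_undup.
Qed.

Lemma Gsplit (k : fieldType) (A : algType k) (D : cdga_data A) r S G (i : int * int) x :
  [pchar k] =i pred0 -> free_gc D -> diff_cof D r -> splitS D r S -> EAut D r G ->
  S i.1 i.2 x ->
  Wf D (- i.1) (i.1 + i.2) (G (- i.1) (i.1 + i.2) x) /\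
  Wf D (- i.1 - 1) (i.1 + i.2) (G (- i.1) (i.1 + i.2) x - TT S G i x).
Proof.
move=> ch h hd hS [hZ _ _ _ _] hx.
have [hg _] := hZ _ _ _ (W_Zr ch h hd (W_S hS hx)).
by split => //; apply: Wtop hS hg.
Qed.

Lemma PHI_mulS (k : fieldType) (A : algType k) (D : cdga_data A) r S G (i j : int * int) x y :
  [pchar k] =i pred0 -> free_gc D -> diff_cof D r -> splitS D r S -> EAut D r G ->
  S i.1 i.2 x -> S j.1 j.2 y -> PHI S G (x * y) = PHI S G x * PHI S G y.
Proof.
move=> ch h hd hS hG hx hy; have hD := splitDS hS.
have hS' := hS; case: hS' => _ _ _ _ [hSm _].
pose l := (i.1 + j.1, i.2 + j.2).
have hxy : S l.1 l.2 (x * y) := hSm _ _ _ _ _ _ hx hy.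
rewrite (PHI_S ch h hd hS hG hxy) (PHI_S ch h hd hS hG hx) (PHI_S ch h hd hS hG hy).
have [gx wx] := Gsplit ch h hd hS hG hx; have [gy wy] := Gsplit ch h hd hS hG hy.
have hTxy : S l.1 l.2 (TT S G i x * TT S G j y) :=
  hSm _ _ _ _ _ _ (TT_S G i x hS) (TT_S G j y hS).
have hG' := hG; case: hG' => _ _ _ _ [_ hM _ _].
have B := B_W ch h hd (hM _ _ _ _ x y (W_Zr ch h hd (W_S hS hx)) (W_Zr ch h hd (W_S hS hy))).
have e1 : - l.1 = - i.1 + - j.1 by rewrite /= opprD.
have e2 : l.1 + l.2 = (i.1 + i.2) + (j.1 + j.2) by rewrite /=; ring.
set Gx := G _ _ x in gx wx B; set Gy := G _ _ y in gy wy B.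
set Tx := TT S G i x in wx hTxy *; set Ty := TT S G j y in wy hTxy *.
have W2 : Wf D (- i.1 + - j.1 - 1) ((i.1 + i.2) + (j.1 + j.2)) (Gx * Gy - Tx * Ty).
  rewrite prod_diff; apply: Wf_add.
    apply: Wf_eq (Wf_mul ch h (W_S hS (TT_S G i x hS)) wy); ring.
  apply: Wf_eq (Wf_mul ch h wx gy); ring.
have eW : forall a b c : A, a - b + (b - c) = a - c by move=> a b c; rewrite addrA subrK.
have W3 := Wf_add B W2; rewrite eW in W3.
have lt : - i.1 + - j.1 - 1 < - l.1 by rewrite e1; lia.
have := Wkill hS W3 lt; rewrite /TT -/l e1 e2 proj_sub // => /eqP.
rewrite subr_eq0 => /eqP ->.
by rewrite (@proj_self _ _ _ (VS S) l l _ hD hTxy) eqxx.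
Qed.
Lemma PHI_mul (k : fieldType) (A : algType k) (D : cdga_data A) r S G a b :
  [pchar k] =i pred0 -> free_gc D -> diff_cof D r -> splitS D r S -> EAut D r G ->
  PHI S G (a * b) = PHI S G a * PHI S G b.
Proof.
move=> ch h hd hS hG; have hD := splitDS hS; have hl := PHI_lin ch h hd hS hG.
rewrite [in LHS](recon a hS) [in LHS](recon b hS) [in RHS](recon a hS) [in RHS](recon b hS).
rewrite mulr_suml (lin_sum _ _ _ hl) !(lin_sum _ _ _ hl) mulr_suml.
apply: eq_bigr => i _; rewrite mulr_sumr (lin_sum _ _ _ hl) mulr_sumr.
apply: eq_bigr => j _; apply: (PHI_mulS ch h hd hS hG).
  exact: (@proj_in _ _ _ (VS S) i a hD).
exact: (@proj_in _ _ _ (VS S) j b hD).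
Qed.

Lemma one_S (k : fieldType) (A : algType k) (D : cdga_data A) r S :
  splitS D r S -> S 0 0 1.
Proof.
move=> hS; have hD := splitDS hS; have hS' := hS; case: hS' => _ _ _ _ [hSm _].
pose u := proj (VS S) (0, 0) 1.
have hu : forall j y, S j.1 j.2 y -> u * y = y.
  move=> j y hy.
  have e : y = proj (VS S) j (1 * y) by rewrite mul1r (@proj_self _ _ _ (VS S) j j y hD hy) eqxx.
  have hlp : islin (proj (VS S) j) by move=> c a b; apply: proj_lin.
  rewrite [RHS]e [in RHS](recon 1 hS) [in RHS]mulr_suml [in RHS](lin_sum _ _ _ hlp).
  have hij : forall i, proj (VS S) j (proj (VS S) i 1 * y) =
      if i == (0, 0) then u * y else 0.
    move=> i; have hi : S (i.1 + j.1) (i.2 + j.2) (proj (VS S) i 1 * y).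
      by apply: hSm => //; exact: (@proj_in _ _ _ (VS S) i 1 hD).
    rewrite (@proj_self _ _ _ (VS S) j (i.1 + j.1, i.2 + j.2) _ hD hi).
    case: (eqVneq i (0, 0)) => [-> | nz].
      by rewrite /= !add0r -surjective_pairing eqxx.
    case: ifP => // /eqP e'; exfalso; move/eqP: nz; apply.
    have h1 : j.1 = i.1 + j.1 := congr1 fst e'.
    have h2 : j.2 = i.2 + j.2 := congr1 snd e'.
    by case: i h1 h2 {hi e'} => i1 i2 /= h1 h2; congr pair; lia.
  rewrite [RHS](eq_bigr _ (fun i _ => hij i)) -big_mkcond /= sum_pick2 ?undup_uniq //.
  case: ifP => // /negbT hn; by rewrite /u (supp_dch hS hn) mul0r.
have u1 : u = 1.
  have e1 := recon 1 hS.
  have : u * \sum_(i <- undup (dch (VS S) 1).1) proj (VS S) i 1 =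
         \sum_(i <- undup (dch (VS S) 1).1) proj (VS S) i 1.
    rewrite mulr_sumr; apply: eq_bigr => i _; apply: (hu i).
    exact: (@proj_in _ _ _ (VS S) i 1 hD).
  by rewrite -e1 mulr1.
rewrite -u1; exact: (@proj_in _ _ _ (VS S) (0, 0) 1 hD).
Qed.

Lemma PHI_one (k : fieldType) (A : algType k) (D : cdga_data A) r S G :
  [pchar k] =i pred0 -> free_gc D -> diff_cof D r -> splitS D r S -> EAut D r G ->
  PHI S G 1 = 1.
Proof.
move=> ch h hd hS hG; have hD := splitDS hS; have h1 := one_S hS.
rewrite (@PHI_S _ _ D r S G (0, 0) 1 ch h hd hS hG h1) /TT /= oppr0 addr0.
case: hG => _ _ _ _ [_ _ hone _].
have B := B_W ch h hd hone.
have lt : (0 : int) - 1 < - ((0, 0) : int * int).1 by rewrite /=; lia.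
have := Wkill hS B lt; rewrite proj_sub // => /eqP; rewrite subr_eq0 => /eqP ->.
by rewrite (@proj_self _ _ _ (VS S) (0, 0) (0, 0) 1 hD h1) eqxx.
Qed.

Lemma PHI_dS (k : fieldType) (A : algType k) (D : cdga_data A) r S G (i : int * int) x :
  [pchar k] =i pred0 -> free_gc D -> diff_cof D r -> splitS D r S -> EAut D r G ->
  S i.1 i.2 x -> PHI S G (dif D x) = dif D (PHI S G x).
Proof.
move=> ch h hd hS hG hx; have hD := splitDS hS.
have hS' := hS; case: hS' => _ _ _ hSd _.
pose i' := (i.1 + r%:Z, i.2 - r%:Z + 1).
have hdx : S i'.1 i'.2 (dif D x) := hSd _ _ _ hx.
have hdT : S i'.1 i'.2 (dif D (TT S G i x)) := hSd _ _ _ (TT_S G i x hS).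
rewrite (PHI_S ch h hd hS hG hdx) (PHI_S ch h hd hS hG hx).
have [gx wx] := Gsplit ch h hd hS hG hx.
have hG' := hG; case: hG' => _ _ _ _ [_ _ _ hdc].
have B := B_W ch h hd (hdc _ _ _ (W_Zr ch h hd (W_S hS hx))).
have dw := W7 ch h hd wx.
have eW : forall a b c : A, a - b + (b - c) = a - c by move=> a b c; rewrite addrA subrK.
have W3 : Wf D (- i.1 - r%:Z - 1) (i.1 + i.2 + 1)
   (G (- i.1 - r%:Z) (i.1 + i.2 + 1) (dif D x) - dif D (TT S G i x)).
  rewrite -(eW _ (dif D (G (- i.1) (i.1 + i.2) x))); apply: Wf_add => //.
  by rewrite -(d_sub _ _ hd); apply: Wf_eq dw => //; ring.
have e1 : - i'.1 = - i.1 - r%:Z by rewrite /= opprD.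
have e2 : i'.1 + i'.2 = i.1 + i.2 + 1 by rewrite /=; ring.
have lt : - i.1 - r%:Z - 1 < - i'.1 by rewrite e1; lia.
have := Wkill hS W3 lt; rewrite /TT -/i' e1 e2 proj_sub // => /eqP.
rewrite subr_eq0 => /eqP ->.
by rewrite (@proj_self _ _ _ (VS S) i' i' _ hD hdT) eqxx.
Qed.

Lemma PHI_d (k : fieldType) (A : algType k) (D : cdga_data A) r S G a :
  [pchar k] =i pred0 -> free_gc D -> diff_cof D r -> splitS D r S -> EAut D r G ->
  PHI S G (dif D a) = dif D (PHI S G a).
Proof.
move=> ch h hd hS hG; have hD := splitDS hS; have hl := PHI_lin ch h hd hS hG.
rewrite [in LHS](recon a hS) [in RHS](recon a hS) (d_sum _ _ _ hd) !(lin_sum _ _ _ hl).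
rewrite (d_sum _ _ _ hd); apply: eq_bigr => i _; apply: (PHI_dS ch h hd hS hG).
exact: (@proj_in _ _ _ (VS S) i a hD).
Qed.

Lemma PHI_ind (k : fieldType) (A : algType k) (D : cdga_data A) r S G :
  [pchar k] =i pred0 -> free_gc D -> diff_cof D r -> splitS D r S -> EAut D r G ->
  induces D r (PHI S G) G.
Proof.
move=> ch h hd hS hG p n x [hx _]; have hD := splitDS hS.
apply: (W_B ch h hd).
have hG' := hG; case: hG' => hZ _ _ _ _.
have [gx _] := hZ _ _ _ (W_Zr ch h hd hx).
pose i := (- p, n + p).
have e1 : - i.1 = p by rewrite /= opprK.
have e2 : i.1 + i.2 = n by rewrite /=; ring.
have hz : Wf D (- i.1) (i.1 + i.2) (PHI S G x - G p n x).
  rewrite e1 e2; apply: Wf_sub => //; exact/(PHI_W _ _ _ ch h hd hS hG).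
have := Wtop hS hz.
rewrite proj_sub // (proj_PHI _ _ ch h hd hS hG) (KT ch h hd hS hG) ?e1 ?e2 //.
by rewrite subrr subr0.
Qed.

Lemma one_two (k : fieldType) (A : algType k) (D : cdga_data A) r :
  [pchar k] =i pred0 -> fg_Er_cofibrant D r -> r_splitting D r -> Er_surjective D r.
Proof.
move=> ch [h [hd _]] [S hS0] G hG; have hS : splitS D r S := hS0.
exists (PHI S G); split; last exact: (PHI_ind ch h hd hS hG).
split.
- exact: (PHI_lin ch h hd hS hG).
- by split; [move=> a b; apply: (PHI_mul _ _ ch h hd hS hG) | apply: (PHI_one ch h hd hS hG)].
- by move=> a; apply: (PHI_d _ ch h hd hS hG).
- exact: (PHI_bij ch h hd hS hG).
- by move=> m n a; apply: (PHI_W _ _ _ ch h hd hS hG).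
Qed.

Unset Implicit Arguments. Set Strict Implicit. Set Printing Implicit Defensive.

Theorem lemma2p17 (k : fieldType) (A : algType k) (D : cdga_data A) (r : nat) :
  [pchar k] =i pred0 ->
  fg_Er_cofibrant D r ->
  (r_splitting D r <-> Er_surjective D r) /\ (Er_surjective D r <-> bigrading_lift D r).
Proof.
move=> ch hfg; have [h [hd hreg]] := hfg.
have i12 := one_two ch hfg; have i23 := two_three ch hd; have i31 := three_one ch hfg.
split; split => H.
- exact: i12.
- exact: i31 (i23 H).
- exact: i23.
- exact: i12 (i31 H).
Qed.
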